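(* Let $y_1,\dots,y_n\in\mathbb{R}$ and $x_1,\dots,x_n,x_1',\dots,x_n'\in\mathbb{R}^d$. Let $\mathcal{H}$, $\mathcal{F}$, $v_f$, $T$, $T_n$ and empirical nets be as in the context. Let $\tilde{\mathcal{H}}_1$ be an empirical $L^2$ $\epsilon_1$-net for $\mathcal{H}$ of cardinality $M_1$ and $\tilde{\mathcal{H}}_2$ an empirical $L^2$ $\epsilon_2$-net for $\mathcal{H}$ of cardinality $M_2$. Let $f=\sum_h\beta_hh\in\mathcal{F}$, let $m_0\ge1$ be an integer and $v\ge v_f$. (i) There exist $m\le m_0+M_1$ and $\tilde h_1,\dots,\tilde h_m\in\tilde{\mathcal{H}}_2$ such that $\tilde f_m=\frac{v}{m_0}\sum_{k=1}^m\tilde h_k$ satisfies $$\frac1n\sum_{i=1}^n(y_i-T\tilde f_m(x_i))^2-\frac1n\sum_{i=1}^n(y_i-f(x_i))^2+\frac1n\sum_{i=1}^n\big(T\tilde f_m(x_i')-Tf(x_i')\big)^2\le\frac{2v^2\epsilon_1^2(1+M_1/m_0)}{m_0}+\frac{v^2M_1}{2m_0^2}+8B_nv(1+M_1/m_0)\epsilon_2+\frac{T_n}{n}.$$ The collection of all functions of this form $\frac{v}{m_0}\sum_{k=1}^m\tilde h_k$ ($m\le m_0+M_1$, $\tilde h_k\in\tilde{\mathcal{H}}_2$) has cardinality at most $\binom{M_2+M_1+m_0}{M_1+m_0}$. (ii) There exist $\tilde h_1,\dots,\tilde h_{m_0}\in\tilde{\mathcal{H}}_2$ such that $\tilde f_{m_0}=\frac{v}{m_0}\sum_{k=1}^{m_0}\tilde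 h_k$ satisfies $$\frac1n\sum_{i=1}^n(y_i-T\tilde f_{m_0}(x_i))^2-\frac1n\sum_{i=1}^n(y_i-f(x_i))^2+\frac1n\sum_{i=1}^n\big(T\tilde f_{m_0}(x_i')-Tf(x_i')\big)^2\le\frac{2vv_f}{m_0}+8B_nv\epsilon_2+\frac{T_n}{n}$$ and there exist $\tilde h_1,\dots,\tilde h_{m_0}\in\tilde{\mathcal{H}}_2$ such that $\tilde f_{m_0}=\frac{v}{m_0}\sum_{k=1}^{m_0}\tilde h_k$ satisfies $$\frac1n\sum_{i=1}^n(\tilde f_{m_0}(x_i)-f(x_i))^2+\frac1n\sum_{i=1}^n(\tilde f_{m_0}(x_i')-f(x_i'))^2\le\frac{4vv_f}{m_0}+4v^2\epsilon_2^2.$$ The collection of all functions $\frac{v}{m_0}\sum_{k=1}^{m_0}\tilde h_k$ with $\tilde h_k\in\tilde{\mathcal{H}}_2$ has cardinality at most $\binom{M_2+m_0}{m_0}$.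
   Context: $\phi:\mathbb{R}\to\mathbb{R}$ satisfies $|\phi|\le1$ and is Lipschitz with constant at most $1$; $\mathcal{H}$ is a collection of functions on $\mathbb{R}^d$ of the form $x\mapsto\pm\phi(\theta\cdot x)$ with $\|\theta\|_1\le\Lambda$, closed under negation and containing the zero function. $\mathcal{F}$ is the set of finite combinations $f=\sum_{h\in\mathcal{H}}\beta_hh$ with $\beta_h\ge0$, and $v_f=\inf\{\sum_h\beta_h: f=\sum_h\beta_hh,\ \beta_h\ge0\}$. For $B_n>0$, $Tf=\min\{|f|,B_n\}\,\mathrm{sgn}f$ and $T_n=2\sum_{i=1}^n(y_i^2-B_n^2)\mathbb{I}\{|y_i|>B_n\}$. An empirical $L^2$ $\epsilon$-net for $\mathcal{H}$ is a finite set $\tilde{\mathcal{H}}\subset\mathcal{H}$ such that for every $h\in\mathcal{H}$ there is $\tilde h\in\tilde{\mathcal{H}}$ with $\frac1{2n}\sum_{i=1}^n|h(x_i)-\tilde h(x_i)|^2+\frac1{2n}\sum_{i=1}^n|h(x_i')-\tilde h(x_i')|^2\le\epsilon^2$. *)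

(* Defs.v *)
From Stdlib Require Import Reals Lra List.
Import ListNotations.
Open Scope R_scope.

(* Points of R^d are represented as sequences nat -> R; only coordinates
   0..d-1 are ever used (dot product and l1-norm are over j < d). *)
Definition vec := nat -> R.

Fixpoint sumR (n : nat) (g : nat -> R) : R :=
  match n with
  | O => 0
  | S k => sumR k g + g k
  end.

Definition dot (d : nat) (theta x : vec) : R := sumR d (fun j => theta j * x j).
Definition l1norm (d : nat) (theta : vec) : R := sumR d (fun j => Rabs (theta j)).

Definition phi_ok (phi : R -> R) : Prop :=
  (forall t, Rabs (phi t) <= 1) /\ (forall s t, Rabs (phi s - phi t) <= Rabs (s - t)).

Definition H_ok (d : nat) (phi : R -> R) (Lambda : R) (H : (vec -> R) -> Prop) : Prop :=
  (forall h, H h ->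
     h = (fun _ => 0) \/
     exists (s : R) (theta : vec),
       (s = 1 \/ s = -1) /\ l1norm d theta <= Lambda /\
       h = (fun x => s * phi (dot d theta x))) /\
  (forall h, H h -> H (fun x => - h x)) /\
  H (fun _ => 0).

(* A finite nonnegative combination sum_h beta_h h, as a list of pairs (beta_h, h). *)
Definition comb_ok (H : (vec -> R) -> Prop) (L : list (R * (vec -> R))) : Prop :=
  forall p, In p L -> 0 <= fst p /\ H (snd p).

Definition comb_fun (L : list (R * (vec -> R))) : vec -> R :=
  fun x => fold_right (fun p acc => fst p * snd p x + acc) 0 L.

Definition comb_weight (L : list (R * (vec -> R))) : R :=
  fold_right (fun p acc => fst p + acc) 0 L.

(* v_f = inf { sum beta_h : f = sum beta_h h, beta_h >= 0 } *)
Definition is_glb (S : R -> Prop) (m : R) : Prop :=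
  (forall s, S s -> m <= s) /\ (forall m', (forall s, S s -> m' <= s) -> m' <= m).

Definition vf_set (H : (vec -> R) -> Prop) (f : vec -> R) (w : R) : Prop :=
  exists L, comb_ok H L /\ (forall x, comb_fun L x = f x) /\ comb_weight L = w.

Definition sgn (t : R) : R :=
  if Rlt_dec 0 t then 1 else if Rlt_dec t 0 then -1 else 0.

Definition trunc (B : R) (g : vec -> R) : vec -> R :=
  fun x => Rmin (Rabs (g x)) B * sgn (g x).

Definition Tn (n : nat) (B : R) (y : nat -> R) : R :=
  2 * sumR n (fun i => (y i ^ 2 - B ^ 2) * (if Rlt_dec B (Rabs (y i)) then 1 else 0)).

Definition emp_net (H : (vec -> R) -> Prop) (n : nat) (x x' : nat -> vec)
  (eps : R) (M : nat) (Ht : list (vec -> R)) : Prop :=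
  NoDup Ht /\ length Ht = M /\ (forall h, In h Ht -> H h) /\
  forall h, H h -> exists ht, In ht Ht /\
    / (2 * INR n) * sumR n (fun i => Rabs (h (x i) - ht (x i)) ^ 2)
    + / (2 * INR n) * sumR n (fun i => Rabs (h (x' i) - ht (x' i)) ^ 2) <= eps ^ 2.

Definition ftilde (v : R) (m0 : nat) (hs : list (vec -> R)) : vec -> R :=
  fun x => v / INR m0 * fold_right (fun h acc => h x + acc) 0 hs.

Definition excess (n : nat) (B : R) (y : nat -> R) (x x' : nat -> vec)
  (g f : vec -> R) : R :=
  / INR n * sumR n (fun i => (y i - trunc B g (x i)) ^ 2)
  - / INR n * sumR n (fun i => (y i - f (x i)) ^ 2)
  + / INR n * sumR n (fun i => (trunc B g (x' i) - trunc B f (x' i)) ^ 2).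

Definition emp_dist2 (n : nat) (x x' : nat -> vec) (g f : vec -> R) : R :=
  / INR n * sumR n (fun i => (g (x i) - f (x i)) ^ 2)
  + / INR n * sumR n (fun i => (g (x' i) - f (x' i)) ^ 2).

(* Main.v *)
Require Import Defs.
From Stdlib Require Import Reals Lra Lia List Permutation Classical FunctionalExtensionality ZArith.
Import ListNotations.
Open Scope R_scope.


Definition lsum {T} (l : list T) (F : T -> R) : R := fold_right (fun t acc => F t + acc) 0 l.

Lemma lsum_nil {T} (F : T -> R) : lsum [] F = 0. Proof. reflexivity. Qed.
Lemma lsum_cons {T} (a : T) l F : lsum (a :: l) F = F a + lsum l F. Proof. reflexivity. Qed.
Lemma lsum_app {T} (l1 l2 : list T) F : lsum (l1 ++ l2) F = lsum l1 F + lsum l2 F.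
Proof. induction l1; simpl; [lra|]. unfold lsum in *; simpl; rewrite IHl1; lra. Qed.
Lemma lsum_map {T U} (g : T -> U) l F : lsum (map g l) F = lsum l (fun t => F (g t)).
Proof. induction l; simpl; auto. unfold lsum in *; simpl; rewrite IHl; lra. Qed.
Lemma lsum_ext {T} (l : list T) F G : (forall t, In t l -> F t = G t) -> lsum l F = lsum l G.
Proof. induction l; simpl; intros; auto. unfold lsum in *; simpl; rewrite H, IHl; auto. Qed.
Lemma lsum_le {T} (l : list T) F G : (forall t, In t l -> F t <= G t) -> lsum l F <= lsum l G.
Proof. induction l; simpl; intros; [lra|]. unfold lsum in *; simpl.
  assert (fold_right (fun t acc => F t + acc) 0 l <= fold_right (fun t acc => G t + acc) 0 l) by (apply IHl; auto).
  specialize (H a (or_introl eq_refl)). lra. Qed.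
Lemma lsum_plus {T} (l : list T) F G : lsum l (fun t => F t + G t) = lsum l F + lsum l G.
Proof. induction l; simpl; [unfold lsum; simpl; lra|]. unfold lsum in *; simpl; rewrite IHl; lra. Qed.
Lemma lsum_scal {T} (l : list T) c F : lsum l (fun t => c * F t) = c * lsum l F.
Proof. induction l; [unfold lsum; simpl; lra|]. unfold lsum in *; simpl; rewrite IHl; lra. Qed.
Lemma lsum_opp {T} (l : list T) F : lsum l (fun t => - F t) = - lsum l F.
Proof. induction l; [unfold lsum; simpl; lra|]. unfold lsum in *; simpl; rewrite IHl; lra. Qed.
Lemma lsum_const0 {T} (l : list T) : lsum l (fun _ => 0) = 0.
Proof. induction l; [reflexivity|]. unfold lsum in *; simpl; rewrite IHl; lra. Qed.
Lemma lsum_nonneg {T} (l : list T) F : (forall t, In t l -> 0 <= F t) -> 0 <= lsum l F.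
Proof. intros. rewrite <- (lsum_const0 l). apply lsum_le; auto. Qed.
Lemma lsum_repeat {T} (a : T) k F : lsum (repeat a k) F = INR k * F a.
Proof. induction k; [unfold lsum; simpl; lra|]. rewrite S_INR. unfold lsum in *; simpl; rewrite IHk; lra. Qed.
Lemma lsum_concat {T} (ls : list (list T)) F : lsum (concat ls) F = lsum ls (fun l => lsum l F).
Proof. induction ls; [reflexivity|]. simpl concat. rewrite lsum_app, IHls. reflexivity. Qed.
Lemma lsum_perm {T} (l1 l2 : list T) F : Permutation l1 l2 -> lsum l1 F = lsum l2 F.
Proof. induction 1; unfold lsum in *; simpl; try lra; try (rewrite IHPermutation; lra). Qed.

Lemma sumR_ext n f g : (forall i, (i < n)%nat -> f i = g i) -> sumR n f = sumR n g.
Proof. induction n; simpl; intros; auto. rewrite IHn, H; auto. Qed.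
Lemma sumR_le n f g : (forall i, (i < n)%nat -> f i <= g i) -> sumR n f <= sumR n g.
Proof. induction n; simpl; intros; [lra|]. assert (sumR n f <= sumR n g) by (apply IHn; auto). specialize (H n (Nat.lt_succ_diag_r n)). lra. Qed.
Lemma sumR_plus n f g : sumR n (fun i => f i + g i) = sumR n f + sumR n g.
Proof. induction n; simpl; [lra|]. rewrite IHn; lra. Qed.
Lemma sumR_scal n c f : sumR n (fun i => c * f i) = c * sumR n f.
Proof. induction n; simpl; [lra|]. rewrite IHn; lra. Qed.
Lemma sumR_opp n f : sumR n (fun i => - f i) = - sumR n f.
Proof. induction n; simpl; [lra|]. rewrite IHn; lra. Qed.
Lemma sumR_const n c : sumR n (fun _ => c) = INR n * c.
Proof. induction n; simpl sumR; [simpl; lra|]. rewrite IHn, S_INR; lra. Qed.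
Lemma sumR_nonneg n f : (forall i, (i < n)%nat -> 0 <= f i) -> 0 <= sumR n f.
Proof. intros. replace 0 with (sumR n (fun _ => 0)) by (rewrite sumR_const; lra). apply sumR_le; auto. Qed.
Lemma lsum_sumR {T} (l : list T) n (G : T -> nat -> R) :
  lsum l (fun t => sumR n (G t)) = sumR n (fun i => lsum l (fun t => G t i)).
Proof. induction l; simpl.
  - unfold lsum; simpl. rewrite sumR_const; lra.
  - unfold lsum in *; simpl. rewrite IHl, <- sumR_plus. reflexivity. Qed.
Lemma lsum_seq M F : lsum (seq 0 M) F = sumR M F.
Proof. induction M; [reflexivity|]. rewrite seq_S, lsum_app, IHM. unfold lsum; simpl; lra. Qed.

Section Pot.
Variable n : nat.
Variables x x' : nat -> vec.

Definition Q (u : vec -> R) := / INR n * sumR n (fun i => u (x i) ^ 2 + u (x' i) ^ 2).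
Definition Psi (c : nat -> R) (u : vec -> R) :=
  / INR n * sumR n (fun i => u (x i) ^ 2 + u (x' i) ^ 2 + 2 * u (x i) * c i).
Definition Lin (A Bc : nat -> R) (d : vec -> R) :=
  / INR n * sumR n (fun i => A i * d (x i) + Bc i * d (x' i)).

Lemma Psi_expand c h d : Psi c (fun z => h z + d z) =
  Psi c h + Lin (fun i => 2 * h (x i) + 2 * c i) (fun i => 2 * h (x' i)) d + Q d.
Proof. unfold Psi, Lin, Q. rewrite <- !Rmult_plus_distr_l, <- !sumR_plus. f_equal.
  apply sumR_ext; intros; ring. Qed.
Lemma Q_expand d w : Q (fun z => d z + w z) =
  Q d + Lin (fun i => 2 * w (x i)) (fun i => 2 * w (x' i)) d + Q w.
Proof. unfold Lin, Q. rewrite <- !Rmult_plus_distr_l, <- !sumR_plus. f_equal.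
  apply sumR_ext; intros; ring. Qed.
Lemma Q_ext u w : (forall z, u z = w z) -> Q u = Q w.
Proof. intros. unfold Q. f_equal. apply sumR_ext; intros; rewrite !H; auto. Qed.
Lemma Psi_ext c u w : (forall z, u z = w z) -> Psi c u = Psi c w.
Proof. intros. unfold Psi. f_equal. apply sumR_ext; intros; rewrite !H; auto. Qed.
Lemma Q_scal s u : Q (fun z => s * u z) = s ^ 2 * Q u.
Proof. unfold Q. rewrite (sumR_ext _ _ (fun i => s^2 * (u (x i) ^ 2 + u (x' i) ^ 2))) by (intros; ring).
  rewrite sumR_scal; ring. Qed.
Lemma Q_nonneg u : 0 <= Q u.
Proof. unfold Q. destruct n as [|k]. simpl; lra.
  apply Rmult_le_pos. left; apply Rinv_0_lt_compat, lt_0_INR; lia.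
  apply sumR_nonneg; intros; nra. Qed.

Definition pr {A} (o : R * (vec -> R) * A) := fst (fst o).
Definition fa {A} (o : R * (vec -> R) * A) := snd (fst o).
Definition pl {A} (o : R * (vec -> R) * A) := snd o.
Definition mean {A} (opts : list (R * (vec -> R) * A)) : vec -> R :=
  fun z => lsum opts (fun o => pr o * fa o z).
Definition valid {A} (opts : list (R * (vec -> R) * A)) :=
  lsum opts pr = 1 /\ forall o, In o opts -> 0 <= pr o.
Definition sigma {A} (opts : list (R * (vec -> R) * A)) :=
  lsum opts (fun o => pr o * Q (fun z => fa o z - mean opts z)).

Lemma mean_dev_zero {A} (opts : list (R * (vec -> R) * A)) z : valid opts ->
  lsum opts (fun o => pr o * (fa o z - mean opts z)) = 0.
Proof. intros [H1 _].
  rewrite (lsum_ext _ _ (fun o => pr o * fa o z + (- mean opts z) * pr o)) by (intros; ring).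
  rewrite lsum_plus, lsum_scal, H1. unfold mean. ring. Qed.

Lemma avg_lin_zero {A} (opts : list (R * (vec -> R) * A)) Ac Bc : valid opts ->
  lsum opts (fun o => pr o * Lin Ac Bc (fun z => fa o z - mean opts z)) = 0.
Proof. intros Hv. unfold Lin.
  rewrite (lsum_ext _ _ (fun o => / INR n * sumR n (fun i => pr o * (Ac i * (fa o (x i) - mean opts (x i)) + Bc i * (fa o (x' i) - mean opts (x' i)))))).
  2:{ intros. rewrite sumR_scal; ring. }
  rewrite lsum_scal, lsum_sumR.
  rewrite (sumR_ext _ _ (fun _ => 0)). rewrite sumR_const; ring.
  intros i _.
  rewrite (lsum_ext _ _ (fun o => Ac i * (pr o * (fa o (x i) - mean opts (x i))) + Bc i * (pr o * (fa o (x' i) - mean opts (x' i))))) by (intros; ring).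
  rewrite lsum_plus, !lsum_scal, !mean_dev_zero; auto. ring. Qed.

Lemma avg_ge {A} (l : list (R * (vec -> R) * A)) F a :
  (forall o, In o l -> 0 <= pr o) -> (forall o, In o l -> 0 < pr o -> a < F o) ->
  a * lsum l pr <= lsum l (fun o => pr o * F o).
Proof. intros. rewrite <- lsum_scal. apply lsum_le. intros o Ho.
  destruct (H o Ho) as [Hp|Hp]. specialize (H0 o Ho Hp). nra. rewrite <- Hp; lra. Qed.

Lemma avg_gt {A} (l : list (R * (vec -> R) * A)) F a :
  (forall o, In o l -> 0 <= pr o) -> (forall o, In o l -> 0 < pr o -> a < F o) ->
  0 < lsum l pr -> a * lsum l pr < lsum l (fun o => pr o * F o).
Proof. induction l as [|o l IH]; intros H0 H1 H2. unfold lsum in H2; simpl in H2; lra.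
  rewrite !lsum_cons in *.
  assert (Hr := avg_ge l F a (fun o' h => H0 o' (in_cons _ _ _ h)) (fun o' h => H1 o' (in_cons _ _ _ h))).
  destruct (H0 o (in_eq _ _)) as [Hp|Hp].
  - specialize (H1 o (in_eq _ _) Hp). nra.
  - assert (0 < lsum l pr) by (rewrite <- Hp in H2; lra).
    assert (a * lsum l pr < lsum l (fun o => pr o * F o)) by (apply IH; auto; intros; [apply H0|apply H1]; auto; right; auto).
    rewrite <- Hp; lra. Qed.

Lemma exists_le_avg {A} (opts : list (R * (vec -> R) * A)) F : valid opts ->
  exists o, In o opts /\ 0 < pr o /\ F o <= lsum opts (fun o => pr o * F o).
Proof. intros [H1 H2]. apply NNPP; intro Hn.
  assert (Hc : forall o, In o opts -> 0 < pr o -> lsum opts (fun o => pr o * F o) < F o).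
  { intros o Ho Hp. apply Rnot_le_lt. intro. apply Hn. exists o; auto. }
  pose proof (avg_gt opts F _ H2 Hc). rewrite H1 in H. lra. Qed.

Lemma step {A} c h (opts : list (R * (vec -> R) * A)) : valid opts ->
  exists o, In o opts /\ 0 < pr o /\
  Psi c (fun z => h z + (fa o z - mean opts z)) <= Psi c h + sigma opts.
Proof. intros Hv.
  destruct (exists_le_avg opts (fun o => Psi c (fun z => h z + (fa o z - mean opts z))) Hv) as [o [Ho [Hp Hle]]].
  exists o; split; auto; split; auto. eapply Rle_trans; [apply Hle|].
  rewrite (lsum_ext _ _ (fun o => Psi c h * pr o + pr o * Lin (fun i => 2 * h (x i) + 2 * c i) (fun i => 2 * h (x' i)) (fun z => fa o z - mean opts z) + pr o * Q (fun z => fa o z - mean opts z))).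
  2:{ intros. rewrite Psi_expand. ring. }
  rewrite !lsum_plus, lsum_scal, avg_lin_zero by auto. destruct Hv as [Hv _]. rewrite Hv. unfold sigma. lra. Qed.

Fixpoint dsum {A} (ch : list (R * (vec -> R) * A)) (steps : list (list (R * (vec -> R) * A))) : vec -> R :=
  match ch, steps with
  | o :: ch', st :: steps' => fun z => (fa o z - mean st z) + dsum ch' steps' z
  | _, _ => fun _ => 0
  end.

Lemma iter {A} c (steps : list (list (R * (vec -> R) * A))) :
  (forall st, In st steps -> valid st) -> forall h, exists ch,
  Forall2 (fun o st => In o st /\ 0 < pr o) ch steps /\
  Psi c (fun z => h z + dsum ch steps z) <= Psi c h + lsum steps sigma.
Proof. induction steps as [|st steps IH]; intros Hv h.
  - exists []. split; [constructor|]. simpl. rewrite (Psi_ext c _ h) by (intros; ring). unfold lsum; simpl; lra.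
  - destruct (step c h st (Hv st (in_eq _ _))) as [o [Ho [Hp Hle]]].
    destruct (IH (fun s hs => Hv s (in_cons _ _ _ hs)) (fun z => h z + (fa o z - mean st z))) as [ch [Hf Hle2]].
    exists (o :: ch). split. constructor; auto.
    simpl dsum. rewrite lsum_cons.
    rewrite (Psi_ext c _ (fun z => (h z + (fa o z - mean st z)) + dsum ch steps z)) by (intros; ring).
    lra. Qed.

Lemma dsum_eq {A} P (ch : list (R * (vec -> R) * A)) steps z : Forall2 P ch steps ->
  dsum ch steps z = lsum ch (fun o => fa o z) - lsum steps (fun st => mean st z).
Proof. induction 1; simpl. unfold lsum; simpl; lra. rewrite IHForall2. unfold lsum; simpl. ring. Qed.

Lemma sigma_le {A} (opts : list (R * (vec -> R) * A)) w : valid opts ->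
  sigma opts <= lsum opts (fun o => pr o * Q (fun z => fa o z - w z)).
Proof. intros Hv.
  rewrite (lsum_ext _ _ (fun o => pr o * Q (fun z => fa o z - mean opts z) + pr o * Lin (fun i => 2 * (mean opts (x i) - w (x i))) (fun i => 2 * (mean opts (x' i) - w (x' i))) (fun z => fa o z - mean opts z) + Q (fun z => mean opts z - w z) * pr o)).
  2:{ intros. rewrite (Q_ext _ (fun z => (fa t z - mean opts z) + (mean opts z - w z))) by (intros; ring).
      rewrite Q_expand. ring. }
  rewrite !lsum_plus, avg_lin_zero, lsum_scal by auto. destruct Hv as [Hv _]; rewrite Hv.
  unfold sigma. pose proof (Q_nonneg (fun z => mean opts z - w z)). lra. Qed.

End Pot.

Definition Tr (B t : R) := Rmin (Rabs t) B * sgn t.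

Lemma T_cases B t : 0 < B ->
  (-B <= t <= B /\ Tr B t = t) \/ (B < t /\ Tr B t = B) \/ (t < -B /\ Tr B t = -B).
Proof. intros HB. unfold Tr, sgn.
  destruct (Rlt_dec 0 t).
  - rewrite Rabs_right by lra. destruct (Rle_dec t B).
    + left. rewrite Rmin_left by lra. split; [lra|ring].
    + right; left. rewrite Rmin_right by lra. split; [lra|ring].
  - destruct (Rlt_dec t 0).
    + rewrite Rabs_left by lra. destruct (Rle_dec (-t) B).
      * left. rewrite Rmin_left by lra. split; [lra|ring].
      * right; right. rewrite Rmin_right by lra. split; [lra|ring].
    + left. assert (t = 0) by lra. subst. split; [lra|ring]. Qed.

Lemma abs_prod_le p q P0 Q0 : Rabs p <= P0 -> Rabs q <= Q0 -> p * q <= P0 * Q0.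
Proof. intros. apply Rle_trans with (Rabs (p*q)). apply Rle_abs. rewrite Rabs_mult.
  apply Rmult_le_compat; auto; apply Rabs_pos. Qed.

Lemma Tr_bound B t : 0 < B -> -B <= Tr B t <= B.
Proof. intros HB. destruct (T_cases B t HB) as [[? ->]|[[? ->]|[? ->]]]; lra. Qed.

Lemma Tr_lip B s t : 0 < B -> Rabs (Tr B s - Tr B t) <= Rabs (s - t).
Proof. intros HB.
  destruct (T_cases B s HB) as [[? ->]|[[? ->]|[? ->]]];
  destruct (T_cases B t HB) as [[? ->]|[[? ->]|[? ->]]];
  unfold Rabs; repeat destruct Rcase_abs; lra. Qed.

Lemma Tr_in B y t : 0 < B -> -B <= y <= B -> (y - Tr B t) ^ 2 <= (y - t) ^ 2.
Proof. intros HB Hy. destruct (T_cases B t HB) as [[? ->]|[[? ->]|[? ->]]]. lra.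
  assert (0 <= (t - B) * (t + B - 2 * y)) by (apply Rmult_le_pos; lra). nra.
  assert (0 <= (-B - t) * (2 * y - t + B)) by (apply Rmult_le_pos; lra). nra. Qed.

Lemma Tr_out_pos B y t : 0 < B -> B < y -> (y - Tr B t) ^ 2 <= (y - t) ^ 2 + (y - B) ^ 2.
Proof. intros HB Hy. destruct (T_cases B t HB) as [[? ->]|[[? ->]|[? ->]]].
  assert (0 <= (y-B)^2) by apply pow2_ge_0. lra. assert (0 <= (y-t)^2) by apply pow2_ge_0. lra.
  assert (0 <= (-B - t) * (2 * y - t + B)) by (apply Rmult_le_pos; lra). assert (0 <= (y-B)^2) by apply pow2_ge_0. nra. Qed.

Lemma Tr_out_neg B y t : 0 < B -> y < -B -> (y - Tr B t) ^ 2 <= (y - t) ^ 2 + (y + B) ^ 2.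
Proof. intros HB Hy. destruct (T_cases B t HB) as [[? ->]|[[? ->]|[? ->]]].
  assert (0 <= (y+B)^2) by apply pow2_ge_0. lra.
  assert (0 <= (t - B) * (t + B - 2 * y)) by (apply Rmult_le_pos; lra). assert (0 <= (y+B)^2) by apply pow2_ge_0. nra.
  assert (0 <= (y-t)^2) by apply pow2_ge_0. lra. Qed.

Lemma K1 B y g gt : 0 < B ->
  (y - Tr B gt) ^ 2 <= (y - g) ^ 2 + 4 * B * Rabs (gt - g)
     + 2 * (y ^ 2 - B ^ 2) * (if Rlt_dec B (Rabs y) then 1 else 0).
Proof. intros HB.
  pose proof (Tr_bound B g HB). pose proof (Tr_bound B gt HB).
  pose proof (Tr_lip B g gt HB) as Hl. rewrite Rabs_minus_sym in Hl.
  replace ((y - Tr B gt) ^ 2) with ((y - Tr B g) ^ 2 + (Tr B g - Tr B gt) * (2 * y - Tr B g - Tr B gt)) by ring.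
  set (a := Tr B g) in *. set (b := Tr B gt) in *. set (e := Rabs (gt - g)) in *.
  assert (He : Rabs (a - b) <= e). { unfold e. rewrite Rabs_minus_sym. rewrite (Rabs_minus_sym gt). apply Hl. }
  destruct (Rlt_dec B (Rabs y)) as [Hy|Hy].
  - destruct (Rle_lt_dec 0 y).
    + rewrite Rabs_right in Hy by lra.
      pose proof (Tr_out_pos B y g HB Hy). fold a in H1.
      assert ((a - b) * (2 * B - a - b) <= e * (4 * B)).
      { apply abs_prod_le; auto. unfold Rabs; destruct Rcase_abs; lra. }
      assert ((a - b) * (2 * (y - B)) <= 2 * B * (2 * (y - B))) by (apply Rmult_le_compat_r; lra).
      replace ((a - b) * (2 * y - a - b)) with ((a - b) * (2 * (y - B)) + (a - b) * (2 * B - a - b)) by ring.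
      nra.
    + rewrite Rabs_left in Hy by lra.
      pose proof (Tr_out_neg B y g HB ltac:(lra)). fold a in H1.
      assert ((a - b) * (-2 * B - a - b) <= e * (4 * B)).
      { apply abs_prod_le; auto. unfold Rabs; destruct Rcase_abs; lra. }
      assert ((b - a) * (2 * (-y - B)) <= 2 * B * (2 * (-y - B))) by (apply Rmult_le_compat_r; lra).
      replace ((a - b) * (2 * y - a - b)) with ((b - a) * (2 * (- y - B)) + (a - b) * (-2 * B - a - b)) by ring.
      nra.
  - assert (-B <= y <= B) by (unfold Rabs in Hy; destruct Rcase_abs in Hy; lra).
    pose proof (Tr_in B y g HB H1). fold a in H2.
    assert ((a - b) * (2 * y - a - b) <= e * (4 * B)).
    { apply abs_prod_le; auto. unfold Rabs; destruct Rcase_abs; lra. }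
    pose proof (Rabs_pos (gt - g)). fold e in H4. nra. Qed.

Lemma K2 B f g gt : 0 < B ->
  (Tr B gt - Tr B f) ^ 2 <= (g - f) ^ 2 + 4 * B * Rabs (gt - g).
Proof. intros HB.
  pose proof (Tr_bound B g HB). pose proof (Tr_bound B gt HB). pose proof (Tr_bound B f HB).
  pose proof (Tr_lip B gt g HB) as Hl. pose proof (Tr_lip B g f HB) as Hl2.
  replace ((Tr B gt - Tr B f) ^ 2) with ((Tr B g - Tr B f) ^ 2 + (Tr B gt - Tr B g) * (Tr B gt + Tr B g - 2 * Tr B f)) by ring.
  assert ((Tr B gt - Tr B g) * (Tr B gt + Tr B g - 2 * Tr B f) <= Rabs (gt - g) * (4 * B)).
  { apply abs_prod_le; auto. unfold Rabs; destruct Rcase_abs; lra. }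
  assert ((Tr B g - Tr B f) ^ 2 <= (g - f) ^ 2).
  { rewrite <- (pow2_abs (Tr B g - Tr B f)), <- (pow2_abs (g - f)).
    pose proof (Rabs_pos (Tr B g - Tr B f)). nra. }
  lra. Qed.

Lemma excess_bound n B y (x x' : nat -> vec) g gt f : (0 < n)%nat -> 0 < B ->
  excess n B y x x' gt f <=
  Psi n x x' (fun i => f (x i) - y i) (fun z => g z - f z)
  + 4 * B * (/ INR n * sumR n (fun i => Rabs (gt (x i) - g (x i)) + Rabs (gt (x' i) - g (x' i))))
  + Tn n B y / INR n.
Proof. intros Hn HB. assert (Hn' : 0 < INR n) by (apply lt_0_INR; auto).
  unfold excess, Psi, Tn.
  match goal with |- / _ * ?S1 - / _ * ?S2 + / _ * ?S3 <= / _ * ?S4 + 4 * B * (/ _ * ?S5) + 2 * ?S6 / _ =>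
    replace (/ INR n * S1 - / INR n * S2 + / INR n * S3) with (/ INR n * (S1 + - S2 + S3)) by ring;
    replace (/ INR n * S4 + 4 * B * (/ INR n * S5) + 2 * S6 / INR n) with (/ INR n * (S4 + (4 * B) * S5 + 2 * S6)) by (field; lra) end.
  rewrite <- sumR_opp, <- !sumR_scal, <- !sumR_plus.
  apply Rmult_le_compat_l. left; apply Rinv_0_lt_compat; auto.
  apply sumR_le. intros i _. unfold trunc. fold (Tr B (gt (x i))). fold (Tr B (gt (x' i))). fold (Tr B (f (x' i))).
  pose proof (K1 B (y i) (g (x i)) (gt (x i)) HB). pose proof (K2 B (f (x' i)) (g (x' i)) (gt (x' i)) HB).
  nra. Qed.

Definition close n (x x' : nat -> vec) eps (h ht : vec -> R) :=
  / (2 * INR n) * sumR n (fun i => Rabs (h (x i) - ht (x i)) ^ 2)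
  + / (2 * INR n) * sumR n (fun i => Rabs (h (x' i) - ht (x' i)) ^ 2) <= eps ^ 2.

Lemma close_Q n x x' eps h ht : (0 < n)%nat -> close n x x' eps h ht ->
  Q n x x' (fun z => ht z - h z) <= 2 * eps ^ 2.
Proof. intros Hn Hc. assert (0 < INR n) by (apply lt_0_INR; auto). unfold close, Q in *.
  replace (/ INR n * sumR n (fun i => (ht (x i) - h (x i)) ^ 2 + (ht (x' i) - h (x' i)) ^ 2))
   with (2 * (/ (2 * INR n) * sumR n (fun i => Rabs (h (x i) - ht (x i)) ^ 2) +
          / (2 * INR n) * sumR n (fun i => Rabs (h (x' i) - ht (x' i)) ^ 2))). lra.
  rewrite <- Rmult_plus_distr_l, <- sumR_plus.
  replace (2 * (/ (2 * INR n) * sumR n (fun i => Rabs (h (x i) - ht (x i)) ^ 2 + Rabs (h (x' i) - ht (x' i)) ^ 2)))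
    with (/ INR n * sumR n (fun i => Rabs (h (x i) - ht (x i)) ^ 2 + Rabs (h (x' i) - ht (x' i)) ^ 2)) by (field; lra).
  f_equal. apply sumR_ext; intros. rewrite !pow2_abs. ring. Qed.

Lemma lim_small X e : 0 <= e -> (forall t, 0 < t -> X <= e ^ 2 / t + t) -> X <= 2 * e.
Proof. intros He H. destruct He as [He|He].
  - specialize (H e He). replace (e ^ 2 / e + e) with (2 * e) in H by (field; lra). auto.
  - subst. destruct (Rle_dec X 0). lra. specialize (H (X/2) ltac:(lra)).
    replace (0 ^ 2 / (X / 2) + X / 2) with (X/2) in H by (field; lra). lra. Qed.

Lemma abs_le_t a t : 0 < t -> Rabs a <= (a ^ 2 / t + t) / 2.
Proof. intros Ht. rewrite <- (pow2_abs a). pose proof (Rabs_pos a).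
  assert (0 <= (Rabs a - t) ^ 2) by apply pow2_ge_0.
  apply Rmult_le_reg_r with (2 * t); [lra|]. field_simplify; [|lra]. nra. Qed.

Lemma close_L1 n x x' eps h ht : (0 < n)%nat -> 0 <= eps -> close n x x' eps h ht ->
  / INR n * sumR n (fun i => Rabs (ht (x i) - h (x i)) + Rabs (ht (x' i) - h (x' i))) <= 2 * eps.
Proof. intros Hn He Hc. assert (0 < INR n) by (apply lt_0_INR; auto).
  apply lim_small; auto. intros t Ht.
  apply Rle_trans with (/ INR n * sumR n (fun i => (Rabs (h (x i) - ht (x i)) ^ 2 + Rabs (h (x' i) - ht (x' i)) ^ 2) / (2 * t) + t)).
  - apply Rmult_le_compat_l. left; apply Rinv_0_lt_compat; auto.
    apply sumR_le; intros. rewrite !pow2_abs.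
    pose proof (abs_le_t (ht (x i) - h (x i)) t Ht). pose proof (abs_le_t (ht (x' i) - h (x' i)) t Ht).
    replace ((h (x i) - ht (x i)) ^ 2) with ((ht (x i) - h (x i)) ^ 2) by ring.
    replace ((h (x' i) - ht (x' i)) ^ 2) with ((ht (x' i) - h (x' i)) ^ 2) by ring.
    apply Rle_trans with ((ht (x i) - h (x i)) ^ 2 / (2 * t) + t / 2 + ((ht (x' i) - h (x' i)) ^ 2 / (2 * t) + t / 2)).
    + replace ((ht (x i) - h (x i)) ^ 2 / (2 * t) + t / 2) with (((ht (x i) - h (x i)) ^ 2 / t + t) / 2) by (field; lra).
      replace ((ht (x' i) - h (x' i)) ^ 2 / (2 * t) + t / 2) with (((ht (x' i) - h (x' i)) ^ 2 / t + t) / 2) by (field; lra). lra.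
    + right; field; lra.
  - unfold close in Hc. rewrite sumR_plus, sumR_const.
    rewrite (sumR_ext _ _ (fun i => / (2 * t) * (Rabs (h (x i) - ht (x i)) ^ 2 + Rabs (h (x' i) - ht (x' i)) ^ 2))) by (intros; field; lra).
    rewrite sumR_scal, sumR_plus.
    assert (Hs : / (2 * INR n) * (sumR n (fun i => Rabs (h (x i) - ht (x i)) ^ 2) + sumR n (fun i => Rabs (h (x' i) - ht (x' i)) ^ 2)) <= eps ^ 2) by lra.
    set (S := sumR n (fun i => Rabs (h (x i) - ht (x i)) ^ 2) + sumR n (fun i => Rabs (h (x' i) - ht (x' i)) ^ 2)) in *.
    replace (/ INR n * (/ (2 * t) * S + INR n * t)) with ((/ (2 * INR n) * S) / t + t) by (field; lra).
    apply Rplus_le_compat_r. unfold Rdiv. apply Rmult_le_compat_r; [left; apply Rinv_0_lt_compat; auto|]. auto. Qed.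

Definition lsf (hs : list (vec -> R)) (z : vec) := lsum hs (fun h => h z).

Lemma ftilde_lsf v m0 hs z : ftilde v m0 hs z = v / INR m0 * lsf hs z.
Proof. reflexivity. Qed.

Lemma net_L1 n x x' eps hs hts : (0 < n)%nat -> 0 <= eps -> Forall2 (close n x x' eps) hs hts ->
  / INR n * sumR n (fun i => Rabs (lsf hts (x i) - lsf hs (x i)) + Rabs (lsf hts (x' i) - lsf hs (x' i)))
  <= 2 * INR (length hs) * eps.
Proof. intros Hn He. assert (0 < INR n) by (apply lt_0_INR; auto). induction 1.
  - unfold lsf, lsum; simpl. rewrite (sumR_ext _ _ (fun _ => 0)) by (intros; rewrite Rminus_0_r, Rabs_R0; ring).
    rewrite sumR_const. lra.
  - simpl length. rewrite S_INR.
    pose proof (close_L1 n x x' eps x0 y Hn He H0).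
    apply Rle_trans with (/ INR n * sumR n (fun i => Rabs (y (x i) - x0 (x i)) + Rabs (y (x' i) - x0 (x' i))) +
      / INR n * sumR n (fun i => Rabs (lsf l' (x i) - lsf l (x i)) + Rabs (lsf l' (x' i) - lsf l (x' i)))); [|lra].
    rewrite <- Rmult_plus_distr_l, <- sumR_plus. apply Rmult_le_compat_l; [left; apply Rinv_0_lt_compat; auto|].
    apply sumR_le; intros. unfold lsf; rewrite !lsum_cons. fold (lsf l (x i)) (lsf l' (x i)) (lsf l (x' i)) (lsf l' (x' i)).
    pose proof (Rabs_triang (y (x i) - x0 (x i)) (lsf l' (x i) - lsf l (x i))).
    pose proof (Rabs_triang (y (x' i) - x0 (x' i)) (lsf l' (x' i) - lsf l (x' i))).
    replace (y (x i) + lsf l' (x i) - (x0 (x i) + lsf l (x i))) with ((y (x i) - x0 (x i)) + (lsf l' (x i) - lsf l (x i))) by ring.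
    replace (y (x' i) + lsf l' (x' i) - (x0 (x' i) + lsf l (x' i))) with ((y (x' i) - x0 (x' i)) + (lsf l' (x' i) - lsf l (x' i))) by ring.
    lra. Qed.

Lemma net_L1_ft n x x' eps v m0 hs hts : (0 < n)%nat -> 0 <= eps -> 0 <= v -> (0 < m0)%nat ->
  Forall2 (close n x x' eps) hs hts ->
  / INR n * sumR n (fun i => Rabs (ftilde v m0 hts (x i) - ftilde v m0 hs (x i)) + Rabs (ftilde v m0 hts (x' i) - ftilde v m0 hs (x' i)))
  <= 2 * (v / INR m0) * INR (length hs) * eps.
Proof. intros Hn He Hv Hm HF. assert (0 < INR m0) by (apply lt_0_INR; auto).
  assert (0 <= v / INR m0) by (unfold Rdiv; apply Rmult_le_pos; [lra|left; apply Rinv_0_lt_compat; lra]).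
  rewrite (sumR_ext _ _ (fun i => v / INR m0 * (Rabs (lsf hts (x i) - lsf hs (x i)) + Rabs (lsf hts (x' i) - lsf hs (x' i))))).
  2:{ intros. rewrite !ftilde_lsf, <- !Rmult_minus_distr_l, !Rabs_mult, (Rabs_right (v / INR m0)) by lra. ring. }
  rewrite sumR_scal. pose proof (net_L1 n x x' eps hs hts Hn He HF).
  replace (/ INR n * (v / INR m0 * sumR n (fun i => Rabs (lsf hts (x i) - lsf hs (x i)) + Rabs (lsf hts (x' i) - lsf hs (x' i)))))
    with (v / INR m0 * (/ INR n * sumR n (fun i => Rabs (lsf hts (x i) - lsf hs (x i)) + Rabs (lsf hts (x' i) - lsf hs (x' i))))) by ring.
  replace (2 * (v / INR m0) * INR (length hs) * eps) with (v / INR m0 * (2 * INR (length hs) * eps)) by ring.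
  apply Rmult_le_compat_l; auto. Qed.

Lemma Q_tri n x x' d w k : 0 < k ->
  Q n x x' (fun z => d z + w z) <= (1 + k) * Q n x x' d + (1 + / k) * Q n x x' w.
Proof. intros Hk. unfold Q. destruct n as [|n0]. simpl. lra.
  assert (0 < INR (S n0)) by (apply lt_0_INR; lia).
  replace ((1 + k) * (/ INR (S n0) * sumR (S n0) (fun i => d (x i) ^ 2 + d (x' i) ^ 2)) +
      (1 + / k) * (/ INR (S n0) * sumR (S n0) (fun i => w (x i) ^ 2 + w (x' i) ^ 2)))
   with (/ INR (S n0) * ((1 + k) * sumR (S n0) (fun i => d (x i) ^ 2 + d (x' i) ^ 2) +
      (1 + / k) * sumR (S n0) (fun i => w (x i) ^ 2 + w (x' i) ^ 2))) by ring.
  rewrite <- (sumR_scal _ (1+k)), <- (sumR_scal _ (1 + / k)), <- sumR_plus. apply Rmult_le_compat_l; [left; apply Rinv_0_lt_compat; auto|].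
  apply sumR_le; intros.
  assert (forall a b, (a + b) ^ 2 <= (1 + k) * a ^ 2 + (1 + / k) * b ^ 2).
  { intros a b. assert (0 <= (k * a - b) ^ 2 / k) by (apply Rmult_le_pos; [apply pow2_ge_0| left; apply Rinv_0_lt_compat; auto]).
    replace ((1 + k) * a ^ 2 + (1 + / k) * b ^ 2) with ((a + b) ^ 2 + (k * a - b) ^ 2 / k) by (field; lra). lra. }
  pose proof (H1 (d (x i)) (w (x i))). pose proof (H1 (d (x' i)) (w (x' i))). lra. Qed.

Lemma net_Q n x x' eps hs hts : (0 < n)%nat -> Forall2 (close n x x' eps) hs hts ->
  Q n x x' (fun z => lsf hts z - lsf hs z) <= INR (length hs) ^ 2 * (2 * eps ^ 2).
Proof. intros Hn. induction 1.
  - simpl. rewrite (Q_ext _ _ _ _ (fun z => 0 * 0)). rewrite Q_scal. pose proof (Q_nonneg n x x' (fun _ => 0)). simpl; lra.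
    intros; unfold lsf, lsum; simpl; ring.
  - simpl length. rewrite S_INR. pose proof (close_Q n x x' eps x0 y Hn H).
    rewrite (Q_ext _ _ _ _ (fun z => (y z - x0 z) + (lsf l' z - lsf l z))) by (intros; unfold lsf; rewrite !lsum_cons; ring).
    destruct (Rle_lt_dec (INR (length l)) 0).
    + assert (length l = 0%nat) by (destruct (length l); auto; rewrite S_INR in r; pose proof (pos_INR n0); lra).
      destruct l; [|simpl in H1; discriminate]. inversion H0; subst.
      rewrite (Q_ext _ _ _ _ (fun z => y z - x0 z)) by (intros; unfold lsf, lsum; simpl; ring). simpl. lra.
    + eapply Rle_trans. apply (Q_tri n x x' _ _ (INR (length l)) r).
      pose proof (Q_nonneg n x x' (fun z => y z - x0 z)).
      apply Rle_trans with ((1 + INR (length l)) * (2 * eps ^ 2) + (1 + / INR (length l)) * (INR (length l) ^ 2 * (2 * eps ^ 2))).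
      apply Rplus_le_compat; apply Rmult_le_compat_l; try lra.
      assert (0 < / INR (length l)) by (apply Rinv_0_lt_compat; auto). lra.
      right. field. lra. Qed.

Lemma H_bound d phi Lambda H h : phi_ok phi -> H_ok d phi Lambda H -> H h -> forall z, Rabs (h z) <= 1.
Proof. intros [Hp _] [HH _] Hh z. destruct (HH h Hh) as [->|[s [th [Hs [_ ->]]]]].
  rewrite Rabs_R0; lra. rewrite Rabs_mult. assert (Hs1 : Rabs s = 1) by (destruct Hs; subst; unfold Rabs; destruct Rcase_abs; lra). rewrite Hs1. specialize (Hp (dot d th z)); lra. Qed.

Lemma Q_le2 n x x' h : (forall z, Rabs (h z) <= 1) -> Q n x x' h <= 2.
Proof. intros Hb. unfold Q. destruct n as [|k]. simpl; lra.
  assert (0 < INR (S k)) by (apply lt_0_INR; lia).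
  apply Rle_trans with (/ INR (S k) * sumR (S k) (fun _ => 2)).
  apply Rmult_le_compat_l; [left; apply Rinv_0_lt_compat; auto|]. apply sumR_le; intros.
  rewrite <- (pow2_abs (h (x i))), <- (pow2_abs (h (x' i))). pose proof (Hb (x i)). pose proof (Hb (x' i)).
  pose proof (Rabs_pos (h (x i))). pose proof (Rabs_pos (h (x' i))). nra.
  rewrite sumR_const. right; field; lra. Qed.

Lemma comb_weight_nonneg H L : comb_ok H L -> 0 <= comb_weight L.
Proof. induction L; intros Hc; simpl. lra. destruct (Hc a (in_eq _ _)).
  assert (0 <= comb_weight L) by (apply IHL; intros p Hp; apply Hc; right; auto). unfold comb_weight in *; simpl; lra. Qed.

Lemma comb_abs d phi Lambda H L z : phi_ok phi -> H_ok d phi Lambda H -> comb_ok H L ->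
  Rabs (comb_fun L z) <= comb_weight L.
Proof. intros Hp HH. induction L; intros Hc. unfold comb_fun, comb_weight; simpl; rewrite Rabs_R0; lra.
  destruct (Hc a (in_eq _ _)) as [Hb Ha].
  assert (Rabs (comb_fun L z) <= comb_weight L) by (apply IHL; intros p Hq; apply Hc; right; auto).
  unfold comb_fun, comb_weight in *; simpl.
  eapply Rle_trans. apply Rabs_triang. rewrite Rabs_mult, (Rabs_right (fst a)) by lra.
  pose proof (H_bound d phi Lambda H _ Hp HH Ha z). nra. Qed.

Lemma Forall2_repeat {T U} (P : T -> U -> Prop) ch st k : Forall2 P ch (repeat st k) ->
  length ch = k /\ forall o, In o ch -> P o st.
Proof. revert ch; induction k; intros ch HF; simpl in HF; inversion HF; subst. split; auto; intros o [].
  destruct (IHk _ H3). split. simpl; auto. intros o [<-|Ho]; auto. Qed.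

Definition zerof : vec -> R := fun _ => 0.
Definition mk (v : R) (m0 : nat) (p : R) (h : vec -> R) : R * (vec -> R) * (vec -> R) :=
  (p, fun z => v / INR m0 * h z, h).
Definition opts2 v m0 (L : list (R * (vec -> R))) :=
  map (fun q => mk v m0 (fst q / v) (snd q)) L ++ [mk v m0 (1 - comb_weight L / v) zerof].

Lemma opts2_valid v m0 H L : 0 < v -> comb_ok H L -> comb_weight L <= v -> valid (opts2 v m0 L).
Proof. intros Hv Hc HW. split.
  - unfold opts2. rewrite lsum_app, lsum_map. unfold lsum at 2; simpl. unfold pr, mk; simpl.
    rewrite (lsum_ext _ _ (fun q => / v * fst q)) by (intros; unfold Rdiv; ring). rewrite lsum_scal.
    change (lsum L fst) with (comb_weight L). field. lra.
  - intros o Ho. unfold opts2 in Ho. apply in_app_or in Ho. destruct Ho as [Ho|[<-|[]]].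
    + apply in_map_iff in Ho. destruct Ho as [q [<- Hq]]. unfold pr, mk; simpl.
      destruct (Hc q Hq). unfold Rdiv; apply Rmult_le_pos; [lra| left; apply Rinv_0_lt_compat; lra].
    + unfold pr, mk; simpl. assert (comb_weight L / v <= 1) by (apply Rmult_le_reg_r with v; [lra|]; field_simplify; lra). lra. Qed.

Lemma opts2_mem v m0 H L o : H zerof -> comb_ok H L -> In o (opts2 v m0 L) ->
  H (pl o) /\ forall z, fa o z = v / INR m0 * pl o z.
Proof. intros H0 Hc Ho. unfold opts2 in Ho. apply in_app_or in Ho. destruct Ho as [Ho|[<-|[]]].
  - apply in_map_iff in Ho. destruct Ho as [q [<- Hq]]. unfold pl, fa, mk; simpl. split; auto. apply (Hc q Hq).
  - unfold pl, fa, mk; simpl. auto. Qed.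

Lemma opts2_mean v m0 L z : 0 < v -> (0 < m0)%nat -> mean (opts2 v m0 L) z = comb_fun L z / INR m0.
Proof. intros Hv Hm. assert (0 < INR m0) by (apply lt_0_INR; auto). unfold mean, opts2.
  rewrite lsum_app, lsum_map. unfold lsum at 2; simpl. unfold pr, fa, mk, zerof; simpl.
  rewrite (lsum_ext _ _ (fun q => / INR m0 * (fst q * snd q z))) by (intros; field; lra). rewrite lsum_scal.
  change (lsum L (fun q => fst q * snd q z)) with (comb_fun L z). field; lra. Qed.

Lemma core_ii d phi Lambda H n x x' L v m0 c f : phi_ok phi -> H_ok d phi Lambda H ->
  (0 < n)%nat -> comb_ok H L -> 0 < v -> (0 < m0)%nat -> comb_weight L <= v ->
  exists hs, length hs = m0 /\ (forall h, In h hs -> H h) /\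
  Psi n x x' c (fun z => ftilde v m0 hs z - f z) <= Psi n x x' c (fun z => comb_fun L z - f z) + 2 * v * comb_weight L / INR m0.
Proof. intros Hp HH Hn Hc Hv Hm HW. assert (Hm' : 0 < INR m0) by (apply lt_0_INR; auto).
  assert (H0 : H zerof) by (destruct HH as [_ [_ ?]]; auto).
  assert (Hval := opts2_valid v m0 H L Hv Hc HW).
  destruct (iter n x x' c (repeat (opts2 v m0 L) m0)) with (h := fun z => comb_fun L z - f z) as [ch [HF Hle]].
  { intros st Hst. apply repeat_spec in Hst. subst; auto. }
  exists (map pl ch). destruct (Forall2_repeat _ _ _ _ HF) as [Hlen Hmem].
  split; [rewrite length_map; auto|]. split.
  { intros h Hh. apply in_map_iff in Hh. destruct Hh as [o [<- Ho]]. destruct (Hmem o Ho). apply (proj1 (opts2_mem v m0 H L o H0 Hc H1)). }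
  rewrite (Psi_ext _ _ _ _ _ (fun z => comb_fun L z - f z + dsum ch (repeat (opts2 v m0 L) m0) z)).
  eapply Rle_trans; [apply Hle|apply Rplus_le_compat_l].
  2:{ intros z. rewrite (dsum_eq _ _ _ z HF). rewrite lsum_repeat, opts2_mean by auto.
    rewrite ftilde_lsf. unfold lsf. rewrite lsum_map.
    rewrite (lsum_ext _ (fun o => fa o z) (fun o => v / INR m0 * pl o z)).
    2:{ intros o Ho. destruct (Hmem o Ho). apply (proj2 (opts2_mem v m0 H L o H0 Hc H1)). }
    rewrite lsum_scal. field. lra. }
  - rewrite lsum_repeat. pose proof (sigma_le n x x' (opts2 v m0 L) zerof Hval).
    assert (lsum (opts2 v m0 L) (fun o => pr o * Q n x x' (fun z => fa o z - zerof z)) <= 2 * v * comb_weight L / INR m0 ^ 2).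
    { unfold opts2. rewrite lsum_app, lsum_map. unfold lsum at 2; simpl. unfold pr, fa, mk, zerof; simpl.
      rewrite (Q_ext _ _ _ _ (fun z => (v / INR m0) * 0)) by (intros; ring). rewrite Q_scal.
      pose proof (Q_nonneg n x x' (fun _ => 0)).
      apply Rle_trans with (lsum L (fun q => fst q * (2 * v / INR m0 ^ 2)) + ((1 - comb_weight L / v) * ((v / INR m0) ^ 2 * Q n x x' (fun _ => 0)) + 0)).
      - apply Rplus_le_compat_r. apply lsum_le. intros q Hq. destruct (Hc q Hq) as [Hb Hh].
        rewrite (Q_ext _ _ _ _ (fun z => (v / INR m0) * snd q z)) by (intros; ring). rewrite Q_scal.
        pose proof (Q_le2 n x x' _ (H_bound d phi Lambda H _ Hp HH Hh)).
        replace (fst q * (2 * v / INR m0 ^ 2)) with (fst q / v * ((v / INR m0) ^ 2 * 2)) by (field; lra).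
        apply Rmult_le_compat_l. unfold Rdiv; apply Rmult_le_pos; [lra|left; apply Rinv_0_lt_compat; lra].
        apply Rmult_le_compat_l; [apply pow2_ge_0|lra].
      - rewrite (lsum_ext _ _ (fun q => (2 * v / INR m0 ^ 2) * fst q)) by (intros; ring). rewrite lsum_scal.
        change (lsum L fst) with (comb_weight L).
        assert (Q n x x' (fun _ => 0) = 0).
        { rewrite (Q_ext _ _ _ _ (fun z => 0 * 0)) by (intros; ring). rewrite Q_scal. ring. }
        rewrite H3. right; field; lra. }
    apply Rle_trans with (INR m0 * (2 * v * comb_weight L / INR m0 ^ 2)). apply Rmult_le_compat_l; lra.
    right; field; lra. Qed.

Lemma Forall2_nth' {T U} (P : T -> U -> Prop) l1 l2 d1 d2 : Forall2 P l1 l2 ->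
  forall i, (i < length l2)%nat -> P (nth i l1 d1) (nth i l2 d2).
Proof. induction 1; simpl; intros i Hi. lia. destruct i; auto. apply IHForall2; lia. Qed.

Lemma Forall2_in_l {T U} (P : T -> U -> Prop) l1 l2 o : Forall2 P l1 l2 -> In o l1 ->
  exists st, In st l2 /\ P o st.
Proof. induction 1; simpl; intros Ho. destruct Ho. destruct Ho as [<-|Ho]. exists y; auto.
  destruct (IHForall2 Ho) as [st [? ?]]. exists st; auto. Qed.

Lemma lsum_nth {T} (l : list T) d F : lsum l F = sumR (length l) (fun j => F (nth j l d)).
Proof. induction l; [reflexivity|]. simpl length. rewrite lsum_cons, IHl.
  clear IHl. assert (forall k (G : nat -> R), sumR (S k) G = G 0%nat + sumR k (fun j => G (S j))).
  { induction k; intros; simpl in *. lra. rewrite IHk. simpl. lra. }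
  rewrite H. simpl. reflexivity. Qed.

Lemma INR_length_lsum {T} (l : list T) : INR (length l) = lsum l (fun _ => 1).
Proof. induction l; [reflexivity|]. simpl length. rewrite S_INR, lsum_cons, IHl. ring. Qed.

Lemma sumR_ind k M c : (k < M)%nat -> sumR M (fun j => if Nat.eqb k j then c else 0) = c.
Proof. induction M; intros Hk. lia. simpl. destruct (Nat.eq_dec k M).
  - subst. rewrite Nat.eqb_refl. rewrite (sumR_ext _ _ (fun _ => 0)). rewrite sumR_const; ring.
    intros i Hi. destruct (Nat.eqb_spec M i); [lia|auto].
  - rewrite IHM by lia. destruct (Nat.eqb_spec k M); [lia|ring]. Qed.

Lemma partition {T} (l : list (T * nat)) M F : (forall t, In t l -> (snd t < M)%nat) ->
  sumR M (fun j => lsum (filter (fun t => Nat.eqb (snd t) j) l) F) = lsum l F.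
Proof. induction l as [|a l IH]; intros Hl.
  - transitivity (sumR M (fun _ => 0)). apply sumR_ext; intros; reflexivity. rewrite sumR_const. unfold lsum; simpl; ring.
  - assert (IH2 := IH (fun t Ht => Hl t (in_cons _ _ _ Ht))). rewrite lsum_cons, <- IH2.
    rewrite (sumR_ext _ _ (fun j => (if Nat.eqb (snd a) j then F a else 0) + lsum (filter (fun t => Nat.eqb (snd t) j) l) F)).
    rewrite sumR_plus, sumR_ind; auto. apply Hl; left; auto.
    intros i _. simpl. destruct (Nat.eqb (snd a) i); [rewrite lsum_cons|]; ring. Qed.

Definition fl (r : R) : nat := Z.to_nat (up r - 1).
Lemma fl_spec r : 0 <= r -> INR (fl r) <= r < INR (fl r) + 1.
Proof. intros Hr. destruct (archimed r) as [H1 H2]. unfold fl.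
  assert (0 <= up r - 1)%Z. { assert (0 < IZR (up r)) by lra. apply lt_IZR in H. lia. }
  rewrite INR_IZR_INZ, Z2Nat.id by auto. rewrite minus_IZR. simpl. lra. Qed.
Lemma fl_zero : fl 0 = 0%nat.
Proof. destruct (fl_spec 0 (Rle_refl 0)). destruct (fl 0); auto. rewrite S_INR in H. pose proof (pos_INR n). lra. Qed.

Section CoreI.
Variables (d : nat) (phi : R -> R) (Lambda : R) (H : (vec -> R) -> Prop).
Hypothesis Hp : phi_ok phi.
Hypothesis HH : H_ok d phi Lambda H.
Variables (n : nat) (x x' : nat -> vec).
Hypothesis Hn : (0 < n)%nat.
Variables (M1 : nat) (Ht1 : list (vec -> R)) (eps1 v : R) (m0 : nat).
Hypothesis He1 : 0 <= eps1.
Hypothesis Hv : 0 < v.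
Hypothesis Hm : (0 < m0)%nat.
Variable L3 : list (R * (vec -> R) * nat).
Definition bt (t : R * (vec -> R) * nat) := fst (fst t).
Definition htf (t : R * (vec -> R) * nat) := snd (fst t).
Hypothesis HL3 : forall t, In t L3 -> 0 <= bt t /\ H (htf t) /\ (snd t < M1)%nat /\
  close n x x' eps1 (htf t) (nth (snd t) Ht1 zerof).

Definition G j := filter (fun t => Nat.eqb (snd t) j) L3.
Definition alpha j := lsum (G j) bt.
Definition Sg j z := lsum (G j) (fun t => bt t * htf t z).
Definition abar j z := Sg j z / alpha j.

Lemma G_in j t : In t (G j) -> In t L3 /\ snd t = j.
Proof. unfold G. rewrite filter_In. intros [? E]. apply Nat.eqb_eq in E. auto. Qed.

Lemma alpha_nonneg j : 0 <= alpha j.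
Proof. apply lsum_nonneg. intros t Ht. apply (HL3 t (proj1 (G_in j t Ht))). Qed.

Lemma Sg_abs j z : Rabs (Sg j z) <= alpha j.
Proof. unfold Sg, alpha. generalize (G j) (fun t Ht => HL3 t (proj1 (G_in j t Ht))).
  induction l as [|a l IH]; intros Hl. unfold lsum; simpl; rewrite Rabs_R0; lra.
  rewrite !lsum_cons. eapply Rle_trans. apply Rabs_triang.
  destruct (Hl a (in_eq _ _)) as [Hb [Hh _]].
  assert (Rabs (lsum l (fun t => bt t * htf t z)) <= lsum l bt) by (apply IH; intros; apply Hl; right; auto).
  rewrite Rabs_mult, (Rabs_right (bt a)) by lra.
  pose proof (H_bound d phi Lambda H _ Hp HH Hh z). nra. Qed.

Lemma alpha_abar j z : alpha j * abar j z = Sg j z.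
Proof. unfold abar. destruct (Req_dec (alpha j) 0) as [E|E].
  - pose proof (Sg_abs j z). rewrite E in *. assert (Sg j z = 0) by (unfold Rabs in H0; destruct Rcase_abs in H0; lra).
    rewrite H1. ring.
  - field; auto. Qed.

Lemma abar_abs j z : Rabs (abar j z) <= 1.
Proof. destruct (Req_dec (alpha j) 0) as [E|E].
  - pose proof (Sg_abs j z). rewrite E in *. assert (Sg j z = 0) by (unfold Rabs in H0; destruct Rcase_abs in H0; lra).
    unfold abar. rewrite H1. unfold Rdiv; rewrite Rmult_0_l, Rabs_R0; lra.
  - pose proof (alpha_nonneg j). assert (0 < alpha j) by lra. pose proof (Sg_abs j z).
    unfold abar. unfold Rdiv. rewrite Rabs_mult, (Rabs_right (/ alpha j)) by (left; apply Rinv_0_lt_compat; auto).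
    apply Rmult_le_reg_r with (alpha j); auto. rewrite Rmult_assoc, Rinv_l by lra. lra. Qed.

Definition rr j := INR m0 * alpha j / v.
Definition kk j := fl (rr j).
Definition pp j := rr j - INR (kk j).

Lemma rr_nonneg j : 0 <= rr j.
Proof. unfold rr. pose proof (alpha_nonneg j). pose proof (pos_INR m0). unfold Rdiv.
  apply Rmult_le_pos; [nra|left; apply Rinv_0_lt_compat; auto]. Qed.
Lemma pp_range j : 0 <= pp j < 1.
Proof. unfold pp, kk. pose proof (fl_spec (rr j) (rr_nonneg j)). lra. Qed.

Definition st1 j : list (R * (vec -> R) * nat) :=
  [(1 - pp j, fun z => v / INR m0 * INR (kk j) * abar j z, kk j);
   (pp j, fun z => v / INR m0 * INR (S (kk j)) * abar j z, S (kk j))].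

Lemma st1_valid j : valid (st1 j).
Proof. pose proof (pp_range j). split. unfold st1, lsum, pr; simpl. ring.
  intros o Ho. unfold st1 in Ho. simpl in Ho. destruct Ho as [<-|[<-|[]]]; unfold pr; simpl; lra. Qed.

Lemma st1_mean j z : mean (st1 j) z = v / INR m0 * rr j * abar j z.
Proof. unfold mean, st1, lsum, pr, fa. cbn [fst snd fold_right]. rewrite S_INR. unfold pp. ring. Qed.

Lemma rr_abar j z : v / INR m0 * rr j * abar j z = Sg j z.
Proof. assert (0 < INR m0) by (apply lt_0_INR; auto). rewrite <- alpha_abar. unfold rr. field. lra. Qed.

Lemma st1_sigma j : sigma n x x' (st1 j) <= v ^ 2 / (2 * INR m0 ^ 2).
Proof. assert (0 < INR m0) by (apply lt_0_INR; auto). pose proof (pp_range j).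
  unfold sigma. rewrite (lsum_ext _ _ (fun o => pr o * Q n x x' (fun z => (v / INR m0 * (INR (pl o) - rr j)) * abar j z))).
  2:{ intros o Ho. f_equal. apply Q_ext. intros z. rewrite st1_mean. unfold st1 in Ho. simpl in Ho.
      destruct Ho as [<-|[<-|[]]]; unfold fa, pl; simpl; ring. }
  unfold st1, lsum, pr, pl; cbn [fst snd fold_right]. rewrite !Q_scal. rewrite S_INR.
  pose proof (Q_le2 n x x' _ (abar_abs j)). pose proof (Q_nonneg n x x' (abar j)).
  replace (INR (kk j) - rr j) with (- pp j) by (unfold pp; ring).
  replace (INR (kk j) + 1 - rr j) with (1 - pp j) by (unfold pp; ring).
  replace ((1 - pp j) * ((v / INR m0 * - pp j) ^ 2 * Q n x x' (abar j)) + (pp j * ((v / INR m0 * (1 - pp j)) ^ 2 * Q n x x' (abar j)) + 0))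
    with ((v / INR m0) ^ 2 * (pp j * (1 - pp j)) * Q n x x' (abar j)) by ring.
  apply Rle_trans with ((v / INR m0) ^ 2 * (1/4) * 2).
  - assert (0 <= (pp j - 1/2)^2) by apply pow2_ge_0.
    apply Rmult_le_compat; try nra. apply Rmult_le_pos; [apply pow2_ge_0|nra].
  - right. field. lra. Qed.

Lemma st1_mem j o : In o (st1 j) -> 0 < pr o ->
  (forall z, fa o z = v / INR m0 * INR (pl o) * abar j z) /\ INR (pl o) <= rr j + 1 /\ (alpha j = 0 -> pl o = 0%nat).
Proof. intros Ho Hpr. pose proof (fl_spec (rr j) (rr_nonneg j)). fold (kk j) in H0. unfold st1 in Ho; simpl in Ho.
  destruct Ho as [<-|[<-|[]]]; unfold fa, pl, pr in *; cbn [fst snd] in *.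
  - split; auto. split. lra. intros E. unfold kk, rr. rewrite E. replace (INR m0 * 0 / v) with 0 by (field; lra). apply fl_zero.
  - split; auto. split. rewrite S_INR; lra. intros E. exfalso. unfold pp, kk, rr in Hpr. rewrite E in Hpr.
    replace (INR m0 * 0 / v) with 0 in Hpr by (field; lra). rewrite fl_zero in Hpr. simpl in Hpr. lra. Qed.

Definition st2 j : list (R * (vec -> R) * (vec -> R)) :=
  map (fun t => (bt t / alpha j, fun z => v / INR m0 * htf t z, htf t)) (G j).

Lemma st2_valid j : 0 < alpha j -> valid (st2 j).
Proof. intros Ha. split.
  - unfold st2. rewrite lsum_map. unfold pr; simpl.
    rewrite (lsum_ext _ _ (fun t => / alpha j * bt t)) by (intros; unfold Rdiv; ring). rewrite lsum_scal.
    fold (alpha j). field. lra.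
  - intros o Ho. unfold st2 in Ho. apply in_map_iff in Ho. destruct Ho as [t [<- Ht]]. unfold pr; simpl.
    destruct (HL3 t (proj1 (G_in j t Ht))). unfold Rdiv. apply Rmult_le_pos; [lra|left; apply Rinv_0_lt_compat; auto]. Qed.

Lemma st2_mean j z : 0 < alpha j -> mean (st2 j) z = v / INR m0 * abar j z.
Proof. intros Ha. assert (0 < INR m0) by (apply lt_0_INR; auto). unfold mean, st2. rewrite lsum_map. unfold pr, fa; simpl.
  rewrite (lsum_ext _ _ (fun t => (v / INR m0 / alpha j) * (bt t * htf t z))) by (intros; field; lra).
  rewrite lsum_scal. fold (Sg j z). unfold abar. field. lra. Qed.

Lemma st2_mem j o : In o (st2 j) -> (forall z, fa o z = v / INR m0 * pl o z) /\ H (pl o).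
Proof. intros Ho. unfold st2 in Ho. apply in_map_iff in Ho. destruct Ho as [t [<- Ht]]. unfold fa, pl; simpl.
  split; auto. apply (HL3 t (proj1 (G_in j t Ht))). Qed.

Lemma st2_sigma j : 0 < alpha j -> sigma n x x' (st2 j) <= (v / INR m0) ^ 2 * (2 * eps1 ^ 2).
Proof. intros Ha. assert (0 < INR m0) by (apply lt_0_INR; auto).
  eapply Rle_trans. apply (sigma_le n x x' (st2 j) (fun z => v / INR m0 * nth j Ht1 zerof z) (st2_valid j Ha)).
  unfold st2. rewrite lsum_map. unfold pr, fa; simpl.
  apply Rle_trans with (lsum (G j) (fun t => bt t / alpha j * ((v / INR m0) ^ 2 * (2 * eps1 ^ 2)))).
  - apply lsum_le. intros t Ht. destruct (G_in j t Ht) as [Ht3 Ej]. destruct (HL3 t Ht3) as [Hb [_ [_ Hc]]].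
    apply Rmult_le_compat_l. unfold Rdiv; apply Rmult_le_pos; [lra|left; apply Rinv_0_lt_compat; auto].
    rewrite (Q_ext _ _ _ _ (fun z => (- (v / INR m0)) * (nth j Ht1 zerof z - htf t z))) by (intros; ring).
    rewrite Q_scal. rewrite Ej in Hc. pose proof (close_Q n x x' eps1 _ _ Hn Hc).
    replace ((- (v / INR m0)) ^ 2) with ((v / INR m0) ^ 2) by ring.
    apply Rmult_le_compat_l; [apply pow2_ge_0|auto].
  - rewrite (lsum_ext _ _ (fun t => ((v / INR m0) ^ 2 * (2 * eps1 ^ 2) / alpha j) * bt t)) by (intros; field; lra).
    rewrite lsum_scal. fold (alpha j). right; field; lra. Qed.


Lemma core_i_L3 c f : lsum L3 bt <= v ->
  exists hs, (length hs <= m0 + M1)%nat /\ (forall h, In h hs -> H h) /\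
  Psi n x x' c (fun z => ftilde v m0 hs z - f z) <=
  Psi n x x' c (fun z => lsum L3 (fun t => bt t * htf t z) - f z) + v ^ 2 * INR M1 / (2 * INR m0 ^ 2)
  + (v / INR m0) ^ 2 * (2 * eps1 ^ 2) * INR (length hs).
Proof. intros HW. assert (Hm0 : 0 < INR m0) by (apply lt_0_INR; auto).
  assert (HM : forall t, In t L3 -> (snd t < M1)%nat) by (intros t Ht; apply (HL3 t Ht)).
  set (rho := fun z => lsum L3 (fun t => bt t * htf t z) - f z).
  set (steps1 := map st1 (seq 0 M1)).
  assert (Hval1 : forall st, In st steps1 -> valid st).
  { intros st Hst. unfold steps1 in Hst. apply in_map_iff in Hst. destruct Hst as [j [<- _]]. apply st1_valid. }
  destruct (iter n x x' c steps1 Hval1 rho) as [ch1 [HF1 Hle1]].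
  set (dflt1 := (0, zerof, 0%nat) : R * (vec -> R) * nat).
  set (m := fun j => pl (nth j ch1 dflt1)).
  assert (Hlen1 : length ch1 = M1).
  { rewrite (Forall2_length HF1). unfold steps1. rewrite length_map, length_seq. auto. }
  assert (Hmf : forall j, (j < M1)%nat -> (forall z, fa (nth j ch1 dflt1) z = v / INR m0 * INR (m j) * abar j z)
      /\ INR (m j) <= rr j + 1 /\ (alpha j = 0 -> m j = 0%nat)).
  { intros j Hj. assert (Hj' : (j < length steps1)%nat) by (unfold steps1; rewrite length_map, length_seq; auto).
    destruct (Forall2_nth' _ _ _ dflt1 (st1 0) HF1 j Hj') as [Ho Hpr].
    unfold steps1 in Ho. rewrite map_nth, seq_nth in Ho by auto. simpl in Ho.
    apply (st1_mem j _ Ho Hpr). }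
  assert (Hd1 : forall z, dsum ch1 steps1 z = sumR M1 (fun j => v / INR m0 * INR (m j) * abar j z) - lsum L3 (fun t => bt t * htf t z)).
  { intros z. rewrite (dsum_eq _ _ _ z HF1). rewrite (lsum_nth ch1 dflt1), Hlen1.
    rewrite (sumR_ext _ (fun j => fa (nth j ch1 dflt1) z) (fun j => v / INR m0 * INR (m j) * abar j z)) by (intros; apply Hmf; auto).
    unfold steps1. rewrite lsum_map, lsum_seq. cbv beta.
    rewrite (sumR_ext _ (fun j => mean (st1 j) z) (fun j => lsum (G j) (fun t => bt t * htf t z))).
    2:{ intros. rewrite st1_mean, rr_abar. reflexivity. }
    unfold G. rewrite partition; auto. }
  set (steps2 := concat (map (fun j => repeat (st2 j) (m j)) (seq 0 M1))).
  assert (Hmpos : forall j, (j < M1)%nat -> (0 < m j)%nat -> 0 < alpha j).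
  { intros j Hj Hmj. destruct (Hmf j Hj) as [_ [_ E]]. pose proof (alpha_nonneg j).
    destruct H0 as [|E2]; auto. specialize (E (eq_sym E2)). lia. }
  assert (Hst2 : forall st, In st steps2 -> exists j, (j < M1)%nat /\ st = st2 j /\ 0 < alpha j).
  { intros st Hst. unfold steps2 in Hst. apply in_concat in Hst. destruct Hst as [l [Hl Hst]].
    apply in_map_iff in Hl. destruct Hl as [j [<- Hj]]. apply in_seq in Hj.
    exists j. split; [lia|]. split. apply repeat_spec in Hst; auto.
    apply Hmpos; [lia|]. destruct (m j); simpl in Hst; [destruct Hst|lia]. }
  assert (Hval2 : forall st, In st steps2 -> valid st).
  { intros st Hst. destruct (Hst2 st Hst) as [j [_ [-> Ha]]]. apply st2_valid; auto. }
  destruct (iter n x x' c steps2 Hval2 (fun z => rho z + dsum ch1 steps1 z)) as [ch2 [HF2 Hle2]].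
  assert (Hmem2 : forall o, In o ch2 -> (forall z, fa o z = v / INR m0 * pl o z) /\ H (pl o)).
  { intros o Ho. destruct (Forall2_in_l _ _ _ o HF2 Ho) as [st [Hst [Ho' _]]].
    destruct (Hst2 st Hst) as [j [_ [-> _]]]. apply (st2_mem j o Ho'). }
  assert (Hmean2 : forall z, lsum steps2 (fun st => mean st z) = sumR M1 (fun j => INR (m j) * (v / INR m0 * abar j z))).
  { intros z. unfold steps2. rewrite lsum_concat, lsum_map, lsum_seq. apply sumR_ext. intros j Hj.
    rewrite lsum_repeat. destruct (m j) eqn:Em. simpl; ring.
    rewrite st2_mean; auto. apply Hmpos; auto; lia. }
  assert (Hlen2 : INR (length (map pl ch2)) = sumR M1 (fun j => INR (m j))).
  { rewrite length_map, (Forall2_length HF2), INR_length_lsum. unfold steps2.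
    rewrite lsum_concat, lsum_map, lsum_seq. apply sumR_ext. intros j Hj. rewrite lsum_repeat; ring. }
  assert (Hsum : sumR M1 (fun j => INR (m j)) <= INR m0 + INR M1).
  { apply Rle_trans with (sumR M1 (fun j => rr j + 1)). apply sumR_le; intros j Hj; apply Hmf; auto.
    rewrite sumR_plus, sumR_const. unfold rr.
    rewrite (sumR_ext _ _ (fun j => (INR m0 / v) * alpha j)) by (intros; unfold Rdiv; ring).
    rewrite sumR_scal. unfold alpha, G. rewrite partition; auto.
    assert (INR m0 / v * lsum L3 bt <= INR m0).
    { apply Rmult_le_reg_r with v; auto. field_simplify; [|lra]. nra. }
    lra. }
  exists (map pl ch2). split; [|split].
  - apply INR_le. rewrite plus_INR. rewrite Hlen2. auto.
  - intros h Hh. apply in_map_iff in Hh. destruct Hh as [o [<- Ho]]. apply (Hmem2 o Ho).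
  - rewrite (Psi_ext _ _ _ _ _ (fun z => (rho z + dsum ch1 steps1 z) + dsum ch2 steps2 z)).
    2:{ intros z. rewrite (dsum_eq _ _ _ z HF2), Hd1, Hmean2. unfold rho.
        rewrite ftilde_lsf. unfold lsf. rewrite lsum_map.
        rewrite (lsum_ext _ (fun o => fa o z) (fun o => v / INR m0 * pl o z)) by (intros; apply Hmem2; auto).
        rewrite lsum_scal.
        rewrite (sumR_ext _ (fun j => INR (m j) * (v / INR m0 * abar j z)) (fun j => v / INR m0 * INR (m j) * abar j z)) by (intros; ring).
        ring. }
    apply Rle_trans with (Psi n x x' c rho + lsum steps1 (sigma n x x') + lsum steps2 (sigma n x x')). lra.
    apply Rplus_le_compat. apply Rplus_le_compat_l.
    + unfold steps1. rewrite lsum_map, lsum_seq.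
      apply Rle_trans with (sumR M1 (fun _ => v ^ 2 / (2 * INR m0 ^ 2))). apply sumR_le; intros; apply st1_sigma.
      rewrite sumR_const. right; field; lra.
    + rewrite Hlen2. unfold steps2. rewrite lsum_concat, lsum_map, lsum_seq.
      rewrite <- sumR_scal. apply sumR_le. intros j Hj. rewrite lsum_repeat.
      destruct (m j) eqn:Em. simpl; lra.
      rewrite Rmult_comm. apply Rmult_le_compat_r. apply pos_INR. apply st2_sigma. apply Hmpos; auto; lia. Qed.

End CoreI.

Lemma tags H n x x' eps M Ht L : emp_net H n x x' eps M Ht -> comb_ok H L ->
  exists L3 : list (R * (vec -> R) * nat),
  (forall z, lsum L3 (fun t => bt t * htf t z) = comb_fun L z) /\ lsum L3 bt = comb_weight L /\
  forall t, In t L3 -> 0 <= bt t /\ H (htf t) /\ (snd t < M)%nat /\ close n x x' eps (htf t) (nth (snd t) Ht zerof).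
Proof. intros [_ [Hlen [_ Hnet]]]. induction L as [|a L IH]; intros Hc.
  - exists []. split; [intros; reflexivity|]. split; [reflexivity|]. intros t [].
  - destruct IH as [L3 [E1 [E2 E3]]]. intros p Hp; apply Hc; right; auto.
    destruct (Hc a (in_eq _ _)) as [Hb Ha].
    destruct (Hnet _ Ha) as [ht [Hin Hcl]].
    destruct (In_nth Ht ht zerof Hin) as [j [Hj Ej]].
    exists ((fst a, snd a, j) :: L3). split; [|split].
    + intros z. rewrite lsum_cons, E1. reflexivity.
    + rewrite lsum_cons, E2. reflexivity.
    + intros t [<-|Ht3]; auto. unfold bt, htf; simpl. rewrite Ej. repeat split; auto. lia. Qed.

Lemma core_i d phi Lambda H n x x' M1 Ht1 eps1 v m0 L c f : phi_ok phi -> H_ok d phi Lambda H ->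
  (0 < n)%nat -> 0 <= eps1 -> 0 < v -> (0 < m0)%nat -> emp_net H n x x' eps1 M1 Ht1 ->
  comb_ok H L -> comb_weight L <= v ->
  exists hs, (length hs <= m0 + M1)%nat /\ (forall h, In h hs -> H h) /\
  Psi n x x' c (fun z => ftilde v m0 hs z - f z) <=
  Psi n x x' c (fun z => comb_fun L z - f z) + v ^ 2 * INR M1 / (2 * INR m0 ^ 2)
  + (v / INR m0) ^ 2 * (2 * eps1 ^ 2) * INR (length hs).
Proof. intros Hp HH Hn He Hv Hm Hnet Hc HW.
  destruct (tags H n x x' eps1 M1 Ht1 L Hnet Hc) as [L3 [E1 [E2 E3]]].
  destruct (core_i_L3 d phi Lambda H Hp HH n x x' Hn M1 Ht1 eps1 v m0 Hv Hm L3 E3 c f) as [hs [H1 [H2 H3]]].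
  rewrite E2; auto.
  exists hs. split; auto. split; auto. rewrite (Psi_ext _ _ _ _ (fun z => comb_fun L z - f z) (fun z => lsum L3 (fun t => bt t * htf t z) - f z)); auto.
  intros; rewrite E1; auto. Qed.

Fixpoint words {T} (k : nat) (l : list T) : list (list T) :=
  match k with
  | O => [[]]
  | S k' => flat_map (fun h => map (cons h) (words k' l)) l
  end.

Lemma words_spec {T} k (l : list T) w : In w (words k l) <-> length w = k /\ forall h, In h w -> In h l.
Proof. revert w; induction k; intros w; simpl.
  - split. intros [<-|[]]. split; auto. intros h []. intros [E _]. destruct w; [auto|discriminate].
  - rewrite in_flat_map. split.
    + intros [h [Hh Hw]]. apply in_map_iff in Hw. destruct Hw as [w' [<- Hw']]. apply IHk in Hw'. destruct Hw'.
      split. simpl; auto. intros h' [<-|?]; auto.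
    + intros [E Hw]. destruct w as [|h w']; [discriminate|]. exists h. split. apply Hw; left; auto.
      apply in_map. apply IHk. split. simpl in E; lia. intros; apply Hw; right; auto. Qed.

Definition wordsle {T} (K : nat) (l : list T) := flat_map (fun k => words k l) (seq 0 (S K)).
Lemma wordsle_spec {T} K (l : list T) w : In w (wordsle K l) <-> (length w <= K)%nat /\ forall h, In h w -> In h l.
Proof. unfold wordsle. rewrite in_flat_map. split.
  - intros [k [Hk Hw]]. apply in_seq in Hk. apply words_spec in Hw. destruct Hw. split; auto. lia.
  - intros [E Hw]. exists (length w). split. apply in_seq; lia. apply words_spec; auto. Qed.

Lemma finite_inf {T} (l : list T) (Phi : T -> R) K :
  (forall eta, 0 < eta -> exists t, In t l /\ Phi t <= K + eta) -> exists t, In t l /\ Phi t <= K.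
Proof. induction l as [|a l IH]; intros Hyp.
  - destruct (Hyp 1 Rlt_0_1) as [t [[] _]].
  - destruct (Rle_dec (Phi a) K). exists a; split; auto; left; auto.
    destruct IH as [t [Ht Hle]].
    + intros eta He. destruct (Hyp (Rmin eta ((Phi a - K) / 2))) as [t [Ht Hle]].
      apply Rmin_pos; lra.
      destruct Ht as [<-|Ht]. pose proof (Rmin_r eta ((Phi a - K) / 2)). lra.
      exists t; split; auto. pose proof (Rmin_l eta ((Phi a - K) / 2)). lra.
    + exists t; split; auto; right; auto. Qed.

Fixpoint reps {T} (l : list T) : nat -> list (list T) :=
  match l with
  | [] => fun _ => [[]]
  | g :: l' => fix aux K := match K with
                            | O => reps l' O
                            | S K' => reps l' (S K') ++ map (cons g) (aux K')
                            end
  end.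

Lemma reps_sub {T} g (l : list T) K w : In w (reps l K) -> In w (reps (g :: l) K).
Proof. destruct K; simpl; auto. intros; apply in_or_app; auto. Qed.

Lemma reps_complete {T} (l : list T) : forall K w, (length w <= K)%nat -> (forall h, In h w -> In h l) ->
  exists r, In r (reps l K) /\ Permutation r w.
Proof. induction l as [|g l IH]; intros K w Hlen Hw.
  - destruct w as [|h w]. exists []. split; [left; auto|constructor]. destruct (Hw h (in_eq _ _)).
  - revert w Hlen Hw. induction K as [|K IHK]; intros w Hlen Hw.
    + destruct w as [|h w]; [|simpl in Hlen; lia]. destruct (IH 0%nat [] (le_n _)) as [r [Hr Hp]]. intros h [].
      exists r. split; auto.
    + destruct (classic (In g w)) as [Hg|Hg].
      * destruct (in_split g w Hg) as [a [b E]]. subst w.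
        destruct (IHK (a ++ b)) as [r [Hr Hp]].
        rewrite length_app in *; simpl in Hlen; lia.
        intros h Hh. assert (In h (a ++ g :: b)) by (apply in_app_or in Hh; apply in_or_app; destruct Hh; [left|right; right]; auto). auto.
        exists (g :: r). split. simpl. apply in_or_app; right. apply in_map. auto.
        apply Permutation_cons_app. auto.
      * destruct (IH (S K) w Hlen) as [r [Hr Hp]].
        intros h Hh. destruct (Hw h Hh) as [<-|?]; auto. contradiction.
        exists r. split; auto. apply reps_sub; auto. Qed.

Lemma C_n0 k : C k 0 = 1.
Proof. unfold C. rewrite Nat.sub_0_r. simpl. assert (INR (Factorial.fact k) <> 0) by (apply not_0_INR; apply Factorial.fact_neq_0).
  field. auto. Qed.

Lemma reps_len {T} (l : list T) : forall K, INR (length (reps l K)) = C (length l + K) K.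
Proof. induction l as [|g l IH]; intros K.
  - simpl. unfold C. rewrite Nat.sub_diag. simpl.
    assert (INR (Factorial.fact K) <> 0) by (apply not_0_INR; apply Factorial.fact_neq_0). field. auto.
  - induction K as [|K IHK].
    + simpl. rewrite IH. rewrite !C_n0. reflexivity.
    + change (reps (g :: l) (S K)) with (reps l (S K) ++ map (cons g) (reps (g :: l) K)).
      rewrite length_app, plus_INR, length_map, IH, IHK. simpl length.
      replace (S (length l) + S K)%nat with (S (S (length l + K))) by lia.
      replace (S (length l) + K)%nat with (S (length l + K)) by lia.
      replace (length l + S K)%nat with (S (length l + K)) by lia.
      rewrite <- (pascal (S (length l + K)) K) by lia. ring. Qed.

Lemma ftilde_perm v m0 r w : Permutation r w -> ftilde v m0 r = ftilde v m0 w.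
Proof. intros Hp. apply functional_extensionality. intros z. rewrite !ftilde_lsf. unfold lsf.
  rewrite (lsum_perm _ _ _ Hp). reflexivity. Qed.

Lemma counting v m0 (Ht : list (vec -> R)) K : exists Lc : list (vec -> R),
  INR (length Lc) <= C (length Ht + K) K /\
  forall hs, (length hs <= K)%nat -> (forall h, In h hs -> In h Ht) -> In (ftilde v m0 hs) Lc.
Proof. exists (map (ftilde v m0) (reps Ht K)). split. rewrite length_map, reps_len. lra.
  intros hs Hl Hh. destruct (reps_complete Ht K hs Hl Hh) as [r [Hr Hp]].
  rewrite <- (ftilde_perm v m0 r hs Hp). apply in_map; auto. Qed.

Lemma Tn_nonneg n B y : 0 < B -> 0 <= Tn n B y.
Proof. intros HB. unfold Tn. apply Rmult_le_pos; [lra|]. apply sumR_nonneg. intros i _.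
  destruct (Rlt_dec B (Rabs (y i))); [|lra]. rewrite Rmult_1_r.
  rewrite <- (pow2_abs (y i)). pose proof (Rabs_pos (y i)). nra. Qed.

Lemma PsiQ n x x' c u : Psi n x x' c u - Q n x x' u = / INR n * sumR n (fun i => 2 * u (x i) * c i).
Proof. unfold Psi, Q. rewrite (sumR_plus n (fun i => u (x i) ^ 2 + u (x' i) ^ 2) (fun i => 2 * u (x i) * c i)). ring. Qed.

Lemma Psi_scal n x x' c s u : Psi n x x' c (fun z => s * u z) = s ^ 2 * Q n x x' u + s * (Psi n x x' c u - Q n x x' u).
Proof. rewrite PsiQ. unfold Psi, Q.
  rewrite (sumR_ext _ _ (fun i => s ^ 2 * (u (x i) ^ 2 + u (x' i) ^ 2) + s * (2 * u (x i) * c i))) by (intros; ring).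
  rewrite sumR_plus, !sumR_scal. ring. Qed.

Lemma Psi0_Q n x x' u : Psi n x x' (fun _ => 0) u = Q n x x' u.
Proof. unfold Psi, Q. f_equal. apply sumR_ext; intros; ring. Qed.

Lemma emp_dist2_Q n x x' g f : emp_dist2 n x x' g f = Q n x x' (fun z => g z - f z).
Proof. unfold emp_dist2, Q. rewrite <- Rmult_plus_distr_l, <- sumR_plus. reflexivity. Qed.

Lemma net_exists H n x x' eps M Ht hs : emp_net H n x x' eps M Ht -> (forall h, In h hs -> H h) ->
  exists hts, Forall2 (close n x x' eps) hs hts /\ forall h, In h hts -> In h Ht.
Proof. intros Hnet. induction hs as [|h hs IH]; intros Hh.
  - exists []. split; [constructor|intros _ []].
  - destruct IH as [hts [HF Hin]]. intros; apply Hh; right; auto.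
    destruct Hnet as [_ [_ [_ Hn]]]. destruct (Hn h (Hh h (in_eq _ _))) as [ht [Hht Hc]].
    exists (ht :: hts). split. constructor; auto. intros g [<-|?]; auto. Qed.

Lemma vf_nonneg H f vf : is_glb (vf_set H f) vf -> 0 <= vf.
Proof. intros [_ Hg]. apply Hg. intros s [L [Hc [_ <-]]]. apply (comb_weight_nonneg H L Hc). Qed.

Definition scaleL (lam : R) (L : list (R * (vec -> R))) := map (fun q => (lam * fst q, snd q)) L.
Lemma scaleL_ok H lam L : 0 <= lam -> comb_ok H L -> comb_ok H (scaleL lam L).
Proof. intros Hl Hc p Hp. unfold scaleL in Hp. apply in_map_iff in Hp. destruct Hp as [q [<- Hq]].
  destruct (Hc q Hq). simpl. split; auto. apply Rmult_le_pos; auto. Qed.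
Lemma scaleL_fun lam L z : comb_fun (scaleL lam L) z = lam * comb_fun L z.
Proof. induction L; unfold comb_fun in *; simpl in *. ring. rewrite IHL. ring. Qed.
Lemma scaleL_weight lam L : comb_weight (scaleL lam L) = lam * comb_weight L.
Proof. induction L; unfold comb_weight in *; simpl in *. ring. rewrite IHL. ring. Qed.

Lemma approx H n x x' c L vf v : is_glb (vf_set H (comb_fun L)) vf -> vf <= v -> 0 < v ->
  forall eta, 0 < eta -> exists L', comb_ok H L' /\ comb_weight L' <= v /\ comb_weight L' <= vf + eta /\
  Psi n x x' c (fun z => comb_fun L' z - comb_fun L z) <= eta /\
  Q n x x' (fun z => comb_fun L' z - comb_fun L z) <= eta.
Proof. intros Hg Hv Hv0 eta He.
  set (f := comb_fun L) in *.
  set (Qf := Q n x x' f). set (Af := Psi n x x' c f - Q n x x' f).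
  assert (HQf : 0 <= Qf) by apply Q_nonneg.
  set (K0 := Qf + Rabs Af + 1).
  assert (HK0 : 0 < K0) by (unfold K0; pose proof (Rabs_pos Af); lra).
  set (delta := Rmin eta (eta * v / K0)).
  assert (Hd : 0 < delta) by (apply Rmin_pos; auto; unfold Rdiv; apply Rmult_lt_0_compat; [nra|apply Rinv_0_lt_compat; auto]).
  assert (Hex : exists s, vf_set H f s /\ s < vf + delta).
  { apply NNPP. intro Hn. destruct Hg as [_ Hg]. assert (vf + delta <= vf); [|lra].
    apply Hg. intros s Hs. apply Rnot_lt_le. intro. apply Hn. exists s; auto. }
  destruct Hex as [s [[L0 [Hc [Hf Hw]]] Hs]].
  assert (Hrho : forall lam, forall z, comb_fun (scaleL lam L0) z - f z = (lam - 1) * f z).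
  { intros lam z. rewrite scaleL_fun, Hf. ring. }
  destruct (Rle_dec s v) as [Hsv|Hsv].
  - exists (scaleL 1 L0). split; [apply scaleL_ok; auto; lra|].
    rewrite scaleL_weight, Hw. split; [lra|]. split. pose proof (Rmin_l eta (eta * v / K0)). fold delta in H0. lra.
    rewrite (Psi_ext _ _ _ _ _ _ (Hrho 1)), (Q_ext _ _ _ _ _ (Hrho 1)), Psi_scal, Q_scal.
    replace (1 - 1) with 0 by ring. lra.
  - assert (Hsp : v < s) by lra. set (lam := v / s).
    assert (Hl : 0 < lam < 1).
    { unfold lam. split. unfold Rdiv; apply Rmult_lt_0_compat; [lra|apply Rinv_0_lt_compat; lra].
      apply Rmult_lt_reg_r with s; [lra|]. unfold Rdiv. rewrite Rmult_assoc, Rinv_l; lra. }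
    assert (H1l : 1 - lam <= eta / K0).
    { assert (1 - lam = (s - v) / s) by (unfold lam; field; lra). rewrite H0.
      pose proof (Rmin_r eta (eta * v / K0)). fold delta in H1.
      apply Rle_trans with (delta / v).
      - unfold Rdiv. apply Rle_trans with ((s - v) * / v).
        apply Rmult_le_compat_l; [lra|]. apply Rinv_le_contravar; lra.
        apply Rmult_le_compat_r; [left; apply Rinv_0_lt_compat; lra|]. lra.
      - apply Rmult_le_reg_r with v; auto. unfold Rdiv. rewrite Rmult_assoc, Rinv_l by lra.
        apply Rle_trans with (eta * v / K0); [lra|]. right; field; lra. }
    exists (scaleL lam L0). split; [apply scaleL_ok; [lra|auto]|].
    rewrite scaleL_weight, Hw. replace (lam * s) with v by (unfold lam; field; lra).
    split; [lra|]. split. pose proof (Rmin_l eta (eta * v / K0)). fold delta in H0. lra.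
    rewrite (Psi_ext _ _ _ _ _ _ (Hrho lam)), (Q_ext _ _ _ _ _ (Hrho lam)), Psi_scal, Q_scal.
    fold Qf. fold Af.
    assert (Hsq : (lam - 1) ^ 2 <= 1 - lam) by nra.
    assert (HeK : eta / K0 * K0 = eta) by (field; lra).
    assert (0 <= eta / K0) by (unfold Rdiv; apply Rmult_le_pos; [lra|left; apply Rinv_0_lt_compat; auto]).
    split.
    + apply Rle_trans with ((1 - lam) * (Qf + Rabs Af)).
      * pose proof (Rle_abs (- Af)). rewrite Rabs_Ropp in H1.
        assert ((lam - 1) ^ 2 * Qf <= (1 - lam) * Qf) by (apply Rmult_le_compat_r; auto).
        assert ((1 - lam) * (- Af) <= (1 - lam) * Rabs Af) by (apply Rmult_le_compat_l; lra).
        replace ((lam - 1) * (Psi n x x' c f - Qf)) with ((1 - lam) * - Af) by (unfold Af, Qf; ring). lra.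
      * apply Rle_trans with (eta / K0 * K0); [|lra]. apply Rmult_le_compat; try lra. pose proof (Rabs_pos Af); lra.
        unfold K0; lra.
    + apply Rle_trans with ((1 - lam) * Qf). apply Rmult_le_compat_r; auto.
      apply Rle_trans with (eta / K0 * K0); [|lra]. apply Rmult_le_compat; try lra. unfold K0; pose proof (Rabs_pos Af); lra. Qed.

Theorem lemma5
  (d : nat) (phi : R -> R) (Lambda : R) (H : (vec -> R) -> Prop)
  (Hphi : phi_ok phi) (HH : H_ok d phi Lambda H)
  (n : nat) (Hn : (0 < n)%nat) (y : nat -> R) (x x' : nat -> vec)
  (B : R) (HB : 0 < B)
  (eps1 eps2 : R) (Heps1 : 0 <= eps1) (Heps2 : 0 <= eps2)
  (M1 M2 : nat) (Ht1 Ht2 : list (vec -> R))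
  (Hnet1 : emp_net H n x x' eps1 M1 Ht1)
  (Hnet2 : emp_net H n x x' eps2 M2 Ht2)
  (L : list (R * (vec -> R))) (HL : comb_ok H L)
  (vf : R) (Hvf : is_glb (vf_set H (comb_fun L)) vf)
  (m0 : nat) (Hm0 : (1 <= m0)%nat) (v : R) (Hv : vf <= v) :
  let f := comb_fun L in
  (* (i) *)
  ((exists hs : list (vec -> R),
      (length hs <= m0 + M1)%nat /\ (forall h, In h hs -> In h Ht2) /\
      excess n B y x x' (ftilde v m0 hs) f
      <= 2 * v ^ 2 * eps1 ^ 2 * (1 + INR M1 / INR m0) / INR m0
         + v ^ 2 * INR M1 / (2 * INR m0 ^ 2)
         + 8 * B * v * (1 + INR M1 / INR m0) * eps2
         + Tn n B y / INR n)
   /\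
   (exists Lc : list (vec -> R),
      INR (length Lc) <= C (M2 + M1 + m0) (M1 + m0) /\
      forall hs : list (vec -> R),
        (length hs <= m0 + M1)%nat -> (forall h, In h hs -> In h Ht2) ->
        In (ftilde v m0 hs) Lc))
  /\
  (* (ii) *)
  ((exists hs : list (vec -> R),
      length hs = m0 /\ (forall h, In h hs -> In h Ht2) /\
      excess n B y x x' (ftilde v m0 hs) f
      <= 2 * v * vf / INR m0 + 8 * B * v * eps2 + Tn n B y / INR n)
   /\
   (exists hs : list (vec -> R),
      length hs = m0 /\ (forall h, In h hs -> In h Ht2) /\
      emp_dist2 n x x' (ftilde v m0 hs) f
      <= 4 * v * vf / INR m0 + 4 * v ^ 2 * eps2 ^ 2)
   /\
   (exists Lc : list (vec -> R),
      INR (length Lc) <= C (M2 + m0) m0 /\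
      forall hs : list (vec -> R),
        length hs = m0 -> (forall h, In h hs -> In h Ht2) ->
        In (ftilde v m0 hs) Lc)).
Proof.
  intros f.
  assert (Hm : (0 < m0)%nat) by lia.
  assert (Hm0' : 0 < INR m0) by (apply lt_0_INR; lia).
  assert (Hn' : 0 < INR n) by (apply lt_0_INR; lia).
  assert (HTn := Tn_nonneg n B y HB).
  assert (HTn' : 0 <= Tn n B y / INR n) by (unfold Rdiv; apply Rmult_le_pos; [auto|left; apply Rinv_0_lt_compat; auto]).
  assert (Hvf0 := vf_nonneg H _ vf Hvf).
  assert (Hv0 : 0 <= v) by lra.
  assert (HM2 : length Ht2 = M2) by (destruct Hnet2 as [_ [? _]]; auto).
  assert (H0 : H zerof) by (destruct HH as [_ [_ ?]]; auto).
  assert (Cnt1 : exists Lc : list (vec -> R),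
      INR (length Lc) <= C (M2 + M1 + m0) (M1 + m0) /\
      forall hs : list (vec -> R),
        (length hs <= m0 + M1)%nat -> (forall h, In h hs -> In h Ht2) ->
        In (ftilde v m0 hs) Lc).
  { destruct (counting v m0 Ht2 (m0 + M1)) as [Lc [Hl Hin]]. exists Lc. split.
    rewrite HM2 in Hl. replace (M2 + M1 + m0)%nat with (M2 + (m0 + M1))%nat by lia.
    replace (M1 + m0)%nat with (m0 + M1)%nat by lia. auto. auto. }
  assert (Cnt2 : exists Lc : list (vec -> R),
      INR (length Lc) <= C (M2 + m0) m0 /\
      forall hs : list (vec -> R),
        length hs = m0 -> (forall h, In h hs -> In h Ht2) ->
        In (ftilde v m0 hs) Lc).
  { destruct (counting v m0 Ht2 m0) as [Lc [Hl Hin]]. exists Lc. split.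
    rewrite HM2 in Hl. auto. intros hs Hl2 Hh. apply Hin; auto; lia. }
  destruct (Req_dec v 0) as [Hv00|Hvp].
  -
    subst v. assert (vf = 0) by lra. subst vf.
    assert (Hf0 : forall z, f z = 0).
    { intros z. apply NNPP. intro Hz. assert (Hp : 0 < Rabs (f z)) by (apply Rabs_pos_lt; auto).
      destruct Hvf as [_ Hg]. assert (Rabs (f z) <= 0); [|lra].
      apply Rle_trans with (0 + Rabs (f z)) ; [lra|].
      apply Hg. intros s [L0 [Hc [Hf Hw]]]. rewrite <- Hw. rewrite Rplus_0_l.
      unfold f. rewrite <- Hf. apply (comb_abs d phi Lambda H L0 z Hphi HH Hc). }
    assert (Hft : forall hs z, ftilde 0 m0 hs z = 0) by (intros; unfold ftilde, Rdiv; ring).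
    assert (Hex : forall hs, excess n B y x x' (ftilde 0 m0 hs) f = 0).
    { intros hs. unfold excess.
      rewrite (sumR_ext _ (fun i => (y i - trunc B (ftilde 0 m0 hs) (x i)) ^ 2) (fun i => (y i - f (x i)) ^ 2)).
      rewrite (sumR_ext _ (fun i => (trunc B (ftilde 0 m0 hs) (x' i) - trunc B f (x' i)) ^ 2) (fun _ => 0)).
      rewrite sumR_const. ring.
      intros; unfold trunc; rewrite Hft, Hf0, Rabs_R0, Rmin_left by lra; ring.
      intros; unfold trunc; rewrite Hft, Hf0, Rabs_R0, Rmin_left by lra; ring. }
    assert (Hed : forall hs, emp_dist2 n x x' (ftilde 0 m0 hs) f = 0).
    { intros hs. unfold emp_dist2. rewrite (sumR_ext _ _ (fun _ => 0)) by (intros; rewrite Hft, Hf0; ring).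
      rewrite sumR_const. rewrite (sumR_ext _ _ (fun _ => 0)) by (intros; rewrite Hft, Hf0; ring). rewrite sumR_const. ring. }
    destruct Hnet2 as [_ [_ [_ Hn2]]]. destruct (Hn2 zerof H0) as [h0 [Hh0 _]].
    split; split.
    + exists []. split; [simpl; lia|]. split; [intros _ []|]. rewrite Hex.
      assert (0 <= eps1 ^ 2) by apply pow2_ge_0.
      replace (2 * 0 ^ 2 * eps1 ^ 2 * (1 + INR M1 / INR m0) / INR m0 + 0 ^ 2 * INR M1 / (2 * INR m0 ^ 2) + 8 * B * 0 * (1 + INR M1 / INR m0) * eps2)
        with 0 by (field; lra). lra.
    + auto.
    + exists (repeat h0 m0). split; [apply repeat_length|]. split; [intros h Hh; apply repeat_spec in Hh; subst; auto|].
      rewrite Hex. replace (2 * 0 * 0 / INR m0 + 8 * B * 0 * eps2) with 0 by (field; lra). lra.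
    + split; auto. exists (repeat h0 m0). split; [apply repeat_length|]. split; [intros h Hh; apply repeat_spec in Hh; subst; auto|].
      rewrite Hed. replace (4 * 0 * 0 / INR m0 + 4 * 0 ^ 2 * eps2 ^ 2) with 0 by (field; lra). lra.
  - assert (Hvpos : 0 < v) by lra. clear Hvp.
    set (c := fun i => f (x i) - y i).
    assert (Hvm : 0 <= v / INR m0) by (unfold Rdiv; apply Rmult_le_pos; [lra|left; apply Rinv_0_lt_compat; auto]).
    split; split.
    +
      set (K := 2 * v ^ 2 * eps1 ^ 2 * (1 + INR M1 / INR m0) / INR m0 + v ^ 2 * INR M1 / (2 * INR m0 ^ 2)
         + 8 * B * v * (1 + INR M1 / INR m0) * eps2 + Tn n B y / INR n).
      destruct (finite_inf (wordsle (m0 + M1) Ht2) (fun hs => excess n B y x x' (ftilde v m0 hs) f) K) as [hs [Hin Hle]].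
      2:{ apply wordsle_spec in Hin. destruct Hin. exists hs; auto. }
      intros eta Heta.
      destruct (approx H n x x' c L vf v Hvf Hv Hvpos eta Heta) as [L' [Hc' [HW1 [HW2 [HPsi _]]]]].
      destruct (core_i d phi Lambda H n x x' M1 Ht1 eps1 v m0 L' c f Hphi HH Hn Heps1 Hvpos Hm Hnet1 Hc' HW1) as [hs [Hlen [HhH Hle]]].
      destruct (net_exists H n x x' eps2 M2 Ht2 hs Hnet2 HhH) as [hts [HF Hts]].
      exists hts. split. apply wordsle_spec; split; auto. rewrite <- (Forall2_length HF); auto.
      pose proof (excess_bound n B y x x' (ftilde v m0 hs) (ftilde v m0 hts) f Hn HB) as E1.
      pose proof (net_L1_ft n x x' eps2 v m0 hs hts Hn Heps2 Hv0 Hm HF) as E2.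
      assert (HL1 : INR (length hs) <= INR m0 + INR M1) by (rewrite <- plus_INR; apply le_INR; auto).
      assert (E3 : (v / INR m0) ^ 2 * (2 * eps1 ^ 2) * INR (length hs) <= 2 * v ^ 2 * eps1 ^ 2 * (1 + INR M1 / INR m0) / INR m0).
      { apply Rle_trans with ((v / INR m0) ^ 2 * (2 * eps1 ^ 2) * (INR m0 + INR M1)).
        apply Rmult_le_compat_l; auto. apply Rmult_le_pos; [apply pow2_ge_0|]. pose proof (pow2_ge_0 eps1); lra.
        right; field; lra. }
      assert (E4 : 4 * B * (2 * (v / INR m0) * INR (length hs) * eps2) <= 8 * B * v * (1 + INR M1 / INR m0) * eps2).
      { apply Rle_trans with (4 * B * (2 * (v / INR m0) * (INR m0 + INR M1) * eps2)).
        apply Rmult_le_compat_l; [lra|]. apply Rmult_le_compat_r; auto. apply Rmult_le_compat_l; lra.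
        right; field; lra. }
      unfold K. unfold c in *. unfold f in *. pose proof (Rmult_le_compat_l (4*B) _ _ ltac:(lra) E2) as E2'. lra.
    + auto.
    +
      set (K := 2 * v * vf / INR m0 + 8 * B * v * eps2 + Tn n B y / INR n).
      destruct (finite_inf (words m0 Ht2) (fun hs => excess n B y x x' (ftilde v m0 hs) f) K) as [hs [Hin Hle]].
      2:{ apply words_spec in Hin. destruct Hin. exists hs; auto. }
      intros eta Heta.
      set (eta' := eta / (1 + 2 * v / INR m0)).
      assert (Hd : 0 < 1 + 2 * v / INR m0) by (assert (0 <= 2 * v / INR m0) by (unfold Rdiv; apply Rmult_le_pos; [lra|left; apply Rinv_0_lt_compat; auto]); lra).
      assert (Heta' : 0 < eta') by (unfold eta'; unfold Rdiv; apply Rmult_lt_0_compat; [auto|apply Rinv_0_lt_compat; auto]).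
      destruct (approx H n x x' c L vf v Hvf Hv Hvpos eta' Heta') as [L' [Hc' [HW1 [HW2 [HPsi _]]]]].
      destruct (core_ii d phi Lambda H n x x' L' v m0 c f Hphi HH Hn Hc' Hvpos Hm HW1) as [hs [Hlen [HhH Hle]]].
      destruct (net_exists H n x x' eps2 M2 Ht2 hs Hnet2 HhH) as [hts [HF Hts]].
      exists hts. split. apply words_spec; split; auto. rewrite <- (Forall2_length HF); auto.
      pose proof (excess_bound n B y x x' (ftilde v m0 hs) (ftilde v m0 hts) f Hn HB) as E1.
      pose proof (net_L1_ft n x x' eps2 v m0 hs hts Hn Heps2 Hv0 Hm HF) as E2. rewrite Hlen in E2.
      assert (E3 : 2 * v * comb_weight L' / INR m0 <= 2 * v * (vf + eta') / INR m0).
      { unfold Rdiv. apply Rmult_le_compat_r; [left; apply Rinv_0_lt_compat; auto|]. apply Rmult_le_compat_l; lra. }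
      assert (E4 : 4 * B * (2 * (v / INR m0) * INR m0 * eps2) = 8 * B * v * eps2) by (field; lra).
      assert (E5 : 2 * v * (vf + eta') / INR m0 + eta' = 2 * v * vf / INR m0 + eta) by (unfold eta'; field; lra).
      unfold K. unfold c in *. unfold f in *. pose proof (Rmult_le_compat_l (4*B) _ _ ltac:(lra) E2) as E2'. lra.
    + split; auto.
      set (K := 4 * v * vf / INR m0 + 4 * v ^ 2 * eps2 ^ 2).
      destruct (finite_inf (words m0 Ht2) (fun hs => emp_dist2 n x x' (ftilde v m0 hs) f) K) as [hs [Hin Hle]].
      2:{ apply words_spec in Hin. destruct Hin. exists hs; auto. }
      intros eta Heta.
      set (eta' := eta / (2 + 4 * v / INR m0)).
      assert (Hd : 0 < 2 + 4 * v / INR m0) by (assert (0 <= 4 * v / INR m0) by (unfold Rdiv; apply Rmult_le_pos; [lra|left; apply Rinv_0_lt_compat; auto]); lra).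
      assert (Heta' : 0 < eta') by (unfold eta'; unfold Rdiv; apply Rmult_lt_0_compat; [auto|apply Rinv_0_lt_compat; auto]).
      destruct (approx H n x x' (fun _ => 0) L vf v Hvf Hv Hvpos eta' Heta') as [L' [Hc' [HW1 [HW2 [HPsi _]]]]].
      destruct (core_ii d phi Lambda H n x x' L' v m0 (fun _ => 0) f Hphi HH Hn Hc' Hvpos Hm HW1) as [hs [Hlen [HhH Hle]]].
      destruct (net_exists H n x x' eps2 M2 Ht2 hs Hnet2 HhH) as [hts [HF Hts]].
      exists hts. split. apply words_spec; split; auto. rewrite <- (Forall2_length HF); auto.
      rewrite !Psi0_Q in Hle. rewrite Psi0_Q in HPsi.
      cbv beta. rewrite emp_dist2_Q.
      rewrite (Q_ext _ _ _ (fun z => ftilde v m0 hts z - f z) (fun z => (ftilde v m0 hts z - ftilde v m0 hs z) + (ftilde v m0 hs z - f z))) by (intros; ring).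
      eapply Rle_trans. apply (Q_tri n x x' _ _ 1 Rlt_0_1).
      pose proof (net_Q n x x' eps2 hs hts Hn HF) as E2. rewrite Hlen in E2.
      rewrite (Q_ext _ _ _ (fun z => ftilde v m0 hts z - ftilde v m0 hs z) (fun z => (v / INR m0) * (lsf hts z - lsf hs z))) by (intros; rewrite !ftilde_lsf; ring).
      rewrite Q_scal.
      assert (E3 : (v / INR m0) ^ 2 * Q n x x' (fun z => lsf hts z - lsf hs z) <= 2 * v ^ 2 * eps2 ^ 2).
      { apply Rle_trans with ((v / INR m0) ^ 2 * (INR m0 ^ 2 * (2 * eps2 ^ 2))).
        apply Rmult_le_compat_l; [apply pow2_ge_0|auto]. right; field; lra. }
      assert (E4 : 2 * v * comb_weight L' / INR m0 <= 2 * v * (vf + eta') / INR m0).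
      { unfold Rdiv. apply Rmult_le_compat_r; [left; apply Rinv_0_lt_compat; auto|]. apply Rmult_le_compat_l; lra. }
      assert (E5 : 2 * (2 * v * (vf + eta') / INR m0) + 2 * eta' = 4 * v * vf / INR m0 + eta) by (unfold eta'; field; lra).
      replace (1 + / 1) with 2 by field. unfold K. unfold f in *. lra.
Qed.
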